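(* Let $\lambda^a$, $\lambda^{ak}$ and the CPS translation $\psi$, $(D:k)$ be as in the context, and let $k$ be a fresh variable. Then: (1) If $\Gamma\vdash^a D:A$, then $\psi(\Gamma),k:K(A)\vdash^a (D:k):R$. (2) If $\Gamma\vdash^a D:A$ and $D\to D'$ in $\lambda^a$, then $(D:k)\to^+(D':k)$ in $\lambda^{ak}$ (one or more reduction steps).
   Context: All terms are considered up to $\alpha$-renaming; $[z/y]D$ is capture-avoiding substitution. Calculus $\lambda^a$: values $V::=*\mid\lambda y_1\ldots y_n.D$ ($n\ge1$); declarations $D::=\mathsf{let}\ x_1=V_1\ \mathsf{in}\cdots\mathsf{let}\ x_m=V_m\ \mathsf{in}\ M$ ($m\ge0$); terms $M::=x\mid @(M,M_1,\ldots,M_n)$ ($n\ge1$). Convention: if $D_i=\mathsf{let}\,(x=V)^*_i\ \mathsf{in}\ M_i$, then $@(D_0,\ldots,D_n)$ abbreviates the declaration obtained by putting all these let-prefixes (renamed apart) in front of $@(M_0,\ldots,M_n)$. Evaluation contexts $E::=\mathsf{let}\ x=V\ \mathsf{in}\ [\,]\mid E[@(x_1,\ldots,x_k,[\,],M_1,\ldots,M_l)]$ ($k,l\ge0$); writing $E=\mathsf{let}\,(x'=V')^*\ \mathsf{in}\ E'$ with $E'$ not starting with a let, $E[\mathsf{let}\,(x=V)^*\ \mathsf{in}\ M]$ denotes $\mathsf{let}\,(x=V)^*\ \mathsf{in}\ \mathsf{let}\,(x'=V')^*\ \mathsf{in}\ E'[M]$ (no capture). Structural congruence $\equiv$: least equivalence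 closed under $\alpha$-renaming and the syntactic operators with $\mathsf{let}\,x_1=V_1\,\mathsf{in}\,\mathsf{let}\,x_2=V_2\,\mathsf{in}\,D\equiv\mathsf{let}\,x_2=V_2\,\mathsf{in}\,\mathsf{let}\,x_1=V_1\,\mathsf{in}\,D$ if $x_1\notin FV(V_2)$, $x_2\notin FV(V_1)$, and $\mathsf{let}\,x=V\,\mathsf{in}\,D\equiv D$ if $x\notin FV(D)$. Reduction: least relation containing $E[\mathsf{let}\,x=\lambda y_1\ldots y_n.D\ \mathsf{in}\ E'[@(x,z_1,\ldots,z_n)]]\to E[\mathsf{let}\,x=\lambda y_1\ldots y_n.D\ \mathsf{in}\ E'[[z_1/y_1,\ldots,z_n/y_n]D]]$ ($z_i$ variables) and closed under $\equiv$ on both sides. Types $A::=\langle 1\rangle\mid\langle A_1\to\cdots\to A_n\to A\rangle$ ($n\ge1$), possibly also involving a fixed distinguished result type $R$. Typing ($\Gamma$ a finite map from variables to types): $\Gamma\vdash^a x:A$ if $x:A\in\Gamma$; $\Gamma\vdash^a\mathsf{let}\,x=*\,\mathsf{in}\,D:A$ if $\Gamma,x:\langle1\rangle\vdash^a D:A$; $\Gamma\vdash^a\mathsf{let}\,x=\lambda y_1\ldots y_n.D'\,\mathsf{in}\,D:B$ if $\Gamma,y_1:A_1,\ldots,y_n:A_n\vdash^a D':C$ and $\Gamma,x:\langle A_1\to\cdots\to A_n\to C\rangle\vdash^a D:B$; $\Gamma\vdash^a @(M,N_1,\ldots,N_n):B$ if $\Gamma\vdash^a M:\langle A_1\to\cdots\to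 A_n\to B\rangle$ and $\Gamma\vdash^a N_i:A_i$ for all $i$. Sub-calculus $\lambda^{ak}$ (administrative CPS form): same reduction, structural congruence and typing rules as $\lambda^a$, restricted to values $V::=*\mid\lambda y^+.D$, declarations $D::=\mathsf{let}\,(x=V)^*\,\mathsf{in}\,M$, terms $M::=@(x,y_1,\ldots,y_n)$ (all variables, $n\ge1$), evaluation contexts $E::=\mathsf{let}\,x=V\,\mathsf{in}\,[\,]$, and types $A::=\langle1\rangle\mid\langle A_1\to\cdots\to A_n\to R\rangle$ where $R$ is a fixed result type. CPS translation: on types $\psi(\langle1\rangle)=\langle1\rangle$, $\psi(\langle A_1\to\cdots\to A_n\to B\rangle)=\langle\psi(A_1)\to\cdots\to\psi(A_n)\to K(B)\to R\rangle$ with $K(B)=\langle\psi(B)\to R\rangle$; $\psi(\Gamma)$ applies $\psi$ pointwise. On values $\psi( * )=*$, $\psi(\lambda y^+.D)=\lambda y^+\,k.(D:k)$. On declarations, for a variable $k$: $(\mathsf{let}\,x=V\,\mathsf{in}\,M):k=\mathsf{let}\,x=\psi(V)\,\mathsf{in}\,(M:k)$ (iterated over let-sequences); $@(x^*,@(M,M^+),N^* ):k=\mathsf{let}\,k'=\lambda y.(@(x^*,y,N^* ):k)\,\mathsf{in}\,(@(M,M^+):k')$ where $x^*$ is a possibly empty list of variables (including the head position) and $k',y$ are fresh; $@(x,x_1,\ldots,x_n):k=@(x,x_1,\ldots,x_n,k)$; $x:k=@(k,x)$. *)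

(* Defs.v *)
(* plain inductive syntax of the calculi lambda^a / lambda^ak,
   named variables (nat), alpha-equivalence handled through the structural
   congruence (which contains alpha-renaming), as in the paper. *)
From Stdlib Require Import List Arith Relations.
Import ListNotations.

Definition var := nat.

(* terms  M ::= x | @(M, M1, ..., Mn)   (n >= 1) *)
Inductive term : Type :=
| Var (x : var)
| App (m : term) (m1 : term) (ms : list term).

(* values V ::= * | \y1...yn. D  (n >= 1);   declarations D ::= let x = V in D | M *)
Inductive val : Type :=
| Star
| Lam (y : var) (ys : list var) (d : decl)
with decl : Type :=
| Let (x : var) (v : val) (d : decl)
| Ret (m : term).

(* A ::= <1> | <A1 -> ... -> An -> B> (n >= 1) | R *)
Inductive ty : Type :=
| TUnit
| TArr (A1 : ty) (As : list ty) (B : ty)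
| TR.

Fixpoint tvars (t : term) : list var :=
  match t with
  | Var x => [x]
  | App m m1 ms =>
      tvars m ++ tvars m1 ++ (fix go (l : list term) : list var :=
                                match l with [] => [] | t :: l => tvars t ++ go l end) ms
  end.

Definition tvars_list (l : list term) : list var := flat_map tvars l.

Definition remove_all (ks : list var) (l : list var) : list var :=
  filter (fun v => negb (existsb (Nat.eqb v) ks)) l.

Fixpoint fv_val (v : val) : list var :=
  match v with
  | Star => []
  | Lam y ys d => remove_all (y :: ys) (fv_decl d)
  end
with fv_decl (d : decl) : list var :=
  match d with
  | Let x v d => fv_val v ++ remove_all [x] (fv_decl d)
  | Ret m => tvars m
  end.

Fixpoint bv_val (v : val) : list var :=
  match v with
  | Star => []
  | Lam y ys d => y :: ys ++ bv_decl d
  end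
with bv_decl (d : decl) : list var :=
  match d with
  | Let x v d => x :: bv_val v ++ bv_decl d
  | Ret m => []
  end.

Definition allvars_val (v : val) : list var := fv_val v ++ bv_val v.
Definition allvars_decl (d : decl) : list var := fv_decl d ++ bv_decl d.

(* naive simultaneous substitution, stopping at rebinding binders; it is
   capture-avoiding whenever no binder of the target is in the range of the
   substitution (this side condition is imposed where it is used; general
   capture-avoiding substitution is then obtained up to alpha, i.e. up to the
   structural congruence, under which reduction is closed). *)
Fixpoint assoc (s : list (var * var)) (x : var) : var :=
  match s with
  | [] => x
  | (a, b) :: s' => if Nat.eqb a x then b else assoc s' x
  end.

Definition drop_keys (ks : list var) (s : list (var * var)) : list (var * var) :=
  filter (fun p => negb (existsb (Nat.eqb (fst p)) ks)) s.

Fixpoint subst_term (s : list (var * var)) (t : term) : term :=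
  match t with
  | Var x => Var (assoc s x)
  | App m m1 ms =>
      App (subst_term s m) (subst_term s m1)
          ((fix go (l : list term) : list term :=
              match l with [] => [] | t :: l => subst_term s t :: go l end) ms)
  end.

Fixpoint subst_val (s : list (var * var)) (v : val) : val :=
  match v with
  | Star => Star
  | Lam y ys d => Lam y ys (subst_decl (drop_keys (y :: ys) s) d)
  end
with subst_decl (s : list (var * var)) (d : decl) : decl :=
  match d with
  | Let x v d => Let x (subst_val s v) (subst_decl (drop_keys [x] s) d)
  | Ret m => Ret (subst_term s m)
  end.

(* the substitution [z1/y1, ..., zn/yn]; with repeated yi the last one wins,
   consistently with the context extension Gamma, y1:A1, ..., yn:An *)
Definition subst_of (ys zs : list var) : list (var * var) := rev (combine ys zs).

Inductive cong_val : val -> val -> Prop :=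
| cv_refl : forall v, cong_val v v
| cv_sym : forall v w, cong_val v w -> cong_val w v
| cv_trans : forall u v w, cong_val u v -> cong_val v w -> cong_val u w
| cv_lam : forall y ys d d', cong_decl d d' -> cong_val (Lam y ys d) (Lam y ys d')
| cv_alpha : forall y ys y' ys' d,
    NoDup (y' :: ys') -> length ys = length ys' ->
    (forall w, In w (y' :: ys') -> ~ In w (allvars_decl d)) ->
    cong_val (Lam y ys d) (Lam y' ys' (subst_decl (subst_of (y :: ys) (y' :: ys')) d))
with cong_decl : decl -> decl -> Prop :=
| cd_refl : forall d, cong_decl d d
| cd_sym : forall d e, cong_decl d e -> cong_decl e d
| cd_trans : forall d e f, cong_decl d e -> cong_decl e f -> cong_decl d f
| cd_let_v : forall x v v' d, cong_val v v' -> cong_decl (Let x v d) (Let x v' d)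
| cd_let_d : forall x v d d', cong_decl d d' -> cong_decl (Let x v d) (Let x v d')
| cd_alpha : forall x x' v d,
    ~ In x' (allvars_decl d) ->
    cong_decl (Let x v d) (Let x' v (subst_decl [(x, x')] d))
| cd_swap : forall x1 v1 x2 v2 d,
    x1 <> x2 -> ~ In x1 (fv_val v2) -> ~ In x2 (fv_val v1) ->
    cong_decl (Let x1 v1 (Let x2 v2 d)) (Let x2 v2 (Let x1 v1 d))
| cd_gc : forall x v d, ~ In x (fv_decl d) -> cong_decl (Let x v d) d.

Definition mkApp (m : term) (args : list term) : term :=
  match args with [] => m | a :: l => App m a l end.

(* an application frame @(x1,...,xk,[ ],M1,...,Ml):
   FHead M1 Ms  : the hole is the head (k = 0, l >= 1);
   FArg x xs Ms : head x, the hole after the variables xs (k >= 1). *)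
Inductive frame : Type :=
| FHead (m1 : term) (ms : list term)
| FArg (x : var) (xs : list var) (ms : list term).

Definition plug_frame (f : frame) (h : term) : term :=
  match f with
  | FHead m1 ms => App h m1 ms
  | FArg x xs ms => mkApp (Var x) (map Var xs ++ h :: ms)
  end.

Definition fv_frame (f : frame) : list var :=
  match f with
  | FHead m1 ms => tvars m1 ++ tvars_list ms
  | FArg x xs ms => x :: xs ++ tvars_list ms
  end.

(* E = let (x=V)* in F, with F a (possibly empty) stack of frames, outermost first *)
Record ectx : Type := { ec_lets : list (var * val); ec_frames : list frame }.

Definition lets (ls : list (var * val)) (m : term) : decl :=
  fold_right (fun p d => Let (fst p) (snd p) d) (Ret m) ls.

Fixpoint split_decl (d : decl) : list (var * val) * term :=
  match d with
  | Let x v d' => let (ls, m) := split_decl d' in ((x, v) :: ls, m)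
  | Ret m => ([], m)
  end.

Definition plug_frames (fs : list frame) (h : term) : term := fold_right plug_frame h fs.

(* E[let (x=V)* in M] := let (x'=V')* in let (x=V)* in E'[M]
   where E = let (x'=V')* in E' *)
Definition plugD (E : ectx) (d : decl) : decl :=
  let (ls, m) := split_decl d in lets (ec_lets E ++ ls) (plug_frames (ec_frames E) m).

(* "no capture": the let-bound variables floated out of the frames of E are
   not free in those frames *)
Definition plug_ok (E : ectx) (d : decl) : Prop :=
  forall x, In x (map fst (fst (split_decl d))) ->
            ~ In x (flat_map fv_frame (ec_frames E)).

(* base rule, parametrised by the admissible evaluation contexts:
   E[let x = \y1..yn.D in E'[@(x,z1,..,zn)]] -> E[let x = \y1..yn.D in E'[[z/y]D]] *)
Inductive base (P : ectx -> Prop) : decl -> decl -> Prop :=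
| base_beta : forall (E E' : ectx) (x y : var) (ys : list var) (D : decl) (z : var) (zs : list var),
    P E -> P E' ->
    length ys = length zs ->
    (* capture-avoidance of the substitution [z/y]D *)
    (forall w, In w (z :: zs) -> ~ In w (bv_decl D)) ->
    (* the x at the call site is the let-bound x, and E' captures nothing of the body *)
    ~ In x (map fst (ec_lets E')) ->
    (forall w, In w (map fst (ec_lets E')) -> ~ In w (fv_val (Lam y ys D))) ->
    (* no capture in the pluggings *)
    plug_ok E' (subst_decl (subst_of (y :: ys) (z :: zs)) D) ->
    plug_ok E (Let x (Lam y ys D) (plugD E' (Ret (App (Var x) (Var z) (map Var zs))))) ->
    plug_ok E (Let x (Lam y ys D) (plugD E' (subst_decl (subst_of (y :: ys) (z :: zs)) D))) ->
    base P
      (plugD E (Let x (Lam y ys D) (plugD E' (Ret (App (Var x) (Var z) (map Var zs))))))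
      (plugD E (Let x (Lam y ys D) (plugD E' (subst_decl (subst_of (y :: ys) (z :: zs)) D)))).

Definition red_a (D D' : decl) : Prop :=
  exists D1 D2, cong_decl D D1 /\ base (fun _ => True) D1 D2 /\ cong_decl D2 D'.

Fixpoint ak_val (v : val) : Prop :=
  match v with
  | Star => True
  | Lam y ys d => ak_decl d
  end
with ak_decl (d : decl) : Prop :=
  match d with
  | Let x v d => ak_val v /\ ak_decl d
  | Ret m => exists x y ys, m = App (Var x) (Var y) (map Var ys)
  end.

(* reduction of lambda^ak: same rule, restricted to lambda^ak syntax and to the
   lambda^ak evaluation contexts let (x=V)* in [ ] (no frames) *)
Definition red_ak (D D' : decl) : Prop :=
  ak_decl D /\ ak_decl D' /\
  exists D1 D2, ak_decl D1 /\ ak_decl D2 /\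
    cong_decl D D1 /\ base (fun E => ec_frames E = []) D1 D2 /\ cong_decl D2 D'.

Definition tctx := list (var * ty).   (* most recent binding first *)

Fixpoint lookup (G : tctx) (x : var) : option ty :=
  match G with
  | [] => None
  | (y, A) :: G' => if Nat.eqb y x then Some A else lookup G' x
  end.

Definition extend (G : tctx) (ys : list var) (As : list ty) : tctx :=
  rev (combine ys As) ++ G.

Inductive has_type_t : tctx -> term -> ty -> Prop :=
| T_var : forall G x A, lookup G x = Some A -> has_type_t G (Var x) A
| T_app : forall G M N1 Ns A1 As B,
    has_type_t G M (TArr A1 As B) ->
    has_type_t G N1 A1 ->
    Forall2 (has_type_t G) Ns As ->
    has_type_t G (App M N1 Ns) B.

Inductive has_type_d : tctx -> decl -> ty -> Prop :=
| T_ret : forall G M A, has_type_t G M A -> has_type_d G (Ret M) A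
| T_let_star : forall G x D A,
    has_type_d ((x, TUnit) :: G) D A -> has_type_d G (Let x Star D) A
| T_let_lam : forall G x y ys D' D A1 As C B,
    length ys = length As ->
    has_type_d (extend G (y :: ys) (A1 :: As)) D' C ->
    has_type_d ((x, TArr A1 As C) :: G) D B ->
    has_type_d G (Let x (Lam y ys D') D) B.

Fixpoint psi (A : ty) : ty :=
  match A with
  | TUnit => TUnit
  | TArr A1 As B =>
      TArr (psi A1)
           ((fix go (l : list ty) : list ty :=
               match l with [] => [] | a :: l => psi a :: go l end) As
            ++ [TArr (psi B) [] TR])
           TR
  | TR => TR
  end.

Definition Kty (B : ty) : ty := TArr (psi B) [] TR.

Definition psi_ctx (G : tctx) : tctx := map (fun p => (fst p, psi (snd p))) G.

Definition fresh (l : list var) : var := S (list_max l).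

Fixpoint size (t : term) : nat :=
  match t with
  | Var _ => 1
  | App m m1 ms =>
      S (size m + size m1 + (fix go (l : list term) : nat :=
                               match l with [] => 0 | t :: l => size t + go l end) ms)
  end.

(* cps_app n acc rest k  computes  @(acc, rest) : k,
   where acc is the (nonempty unless at start) list of leading variables x*
   already scanned; n is fuel (always sufficient, see cps_term). *)
Fixpoint cps_app (n : nat) (acc : list var) (rest : list term) (k : var) : decl :=
  match n with
  | 0 => Ret (Var k)
  | S n' =>
      match rest with
      | [] =>
          match acc with
          | x :: xs => Ret (mkApp (Var x) (map Var (xs ++ [k])))
          | [] => Ret (Var k)
          end
      | Var v :: rest' => cps_app n' (acc ++ [v]) rest' k
      | App m m1 ms :: rest' =>
          (* @(xs, @(M,Ms), Ns) : k =
             let k' = \y.(@(xs,y,Ns) : k) in (@(M,Ms) : k')   with k', y fresh *)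
          let y := fresh (k :: acc ++ tvars_list rest) in
          let k' := S y in
          Let k' (Lam y [] (cps_app n' (acc ++ [y]) rest' k))
                 (cps_app n' [] (m :: m1 :: ms) k')
      end
  end.

Definition cps_term (t : term) (k : var) : decl :=
  match t with
  | Var x => Ret (App (Var k) (Var x) [])
  | App m m1 ms => cps_app (size t) [] (m :: m1 :: ms) k
  end.

Fixpoint cps_val (v : val) : val :=
  match v with
  | Star => Star
  | Lam y ys d =>
      let k := fresh (y :: ys ++ allvars_decl d) in
      Lam y (ys ++ [k]) (cps_decl d k)
  end
with cps_decl (d : decl) (k : var) : decl :=
  match d with
  | Let x v d => Let x (cps_val v) (cps_decl d k)
  | Ret m => cps_term m k
  end.

(* Main.v *)
Require Import Defs.
From Stdlib Require Import List Relations Arith Lia.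
Import ListNotations.

Section TI.
Variable P : term -> Prop.
Hypothesis HV : forall x, P (Var x).
Hypothesis HA : forall m m1 ms, P m -> P m1 -> Forall P ms -> P (App m m1 ms).
Fixpoint term_ind' (t : term) : P t :=
  match t with
  | Var x => HV x
  | App m m1 ms => HA m m1 ms (term_ind' m) (term_ind' m1)
      ((fix go (l : list term) : Forall P l :=
          match l with [] => Forall_nil _ | t :: l => Forall_cons _ (term_ind' t) (go l) end) ms)
  end.
End TI.

Scheme val_ind2 := Induction for val Sort Prop with decl_ind2 := Induction for decl Sort Prop.
Combined Scheme vd_mutind from val_ind2, decl_ind2.

Lemma tvars_App m m1 ms : tvars (App m m1 ms) = tvars m ++ tvars m1 ++ tvars_list ms.
Proof. reflexivity. Qed.

Lemma subst_App s m m1 ms : subst_term s (App m m1 ms) = App (subst_term s m) (subst_term s m1) (map (subst_term s) ms).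
Proof. reflexivity. Qed.

Definition lsize (l : list term) : nat := list_sum (map size l).

Lemma size_App m m1 ms : size (App m m1 ms) = S (size m + size m1 + lsize ms).
Proof. simpl. f_equal. f_equal. unfold lsize. induction ms; simpl; [reflexivity| now rewrite IHms]. Qed.

Lemma size_pos t : 1 <= size t.
Proof. destruct t; simpl; lia. Qed.

Lemma tvars_list_cons t l : tvars_list (t :: l) = tvars t ++ tvars_list l.
Proof. reflexivity. Qed.
Lemma tvars_list_app l1 l2 : tvars_list (l1 ++ l2) = tvars_list l1 ++ tvars_list l2.
Proof. unfold tvars_list. apply flat_map_app. Qed.
Lemma tvars_list_mapVar xs : tvars_list (map Var xs) = xs.
Proof. induction xs; simpl; auto. rewrite IHxs. reflexivity. Qed.

Lemma fresh_gt l x : In x l -> x < fresh l.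
Proof.
  unfold fresh. intros H. assert (x <= list_max l).
  { induction l; simpl in *; [contradiction|]. destruct H; subst; lia || (specialize (IHl H); lia). }
  lia.
Qed.
Lemma fresh_notin l : ~ In (fresh l) l.
Proof. intros H. apply fresh_gt in H. lia. Qed.
Lemma fresh_notin' l x : fresh l <= x -> ~ In x l.
Proof. intros H H'. apply fresh_gt in H'. lia. Qed.

Lemma existsb_eqb_In a ks : existsb (Nat.eqb a) ks = true <-> In a ks.
Proof.
  rewrite existsb_exists. split.
  - intros [y [Hy He]]. apply Nat.eqb_eq in He. subst. auto.
  - intros H. exists a. split; auto. apply Nat.eqb_refl.
Qed.

Lemma In_remove_all v ks l : In v (remove_all ks l) <-> In v l /\ ~ In v ks.
Proof.
  unfold remove_all. rewrite filter_In. rewrite Bool.negb_true_iff.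
  split; intros [H1 H2]; split; auto.
  - intros H. apply existsb_eqb_In in H. congruence.
  - destruct (existsb (Nat.eqb v) ks) eqn:E; auto. apply existsb_eqb_In in E. contradiction.
Qed.

Lemma assoc_drop_in ks s v : In v ks -> assoc (drop_keys ks s) v = v.
Proof.
  intros H. induction s as [|[a b] s IH]; simpl; auto.
  unfold drop_keys in *. simpl.
  destruct (existsb (Nat.eqb a) ks) eqn:E; simpl; auto.
  destruct (Nat.eqb a v) eqn:E2; auto.
  apply Nat.eqb_eq in E2. subst. apply existsb_eqb_In in H. congruence.
Qed.

Lemma assoc_drop_notin ks s v : ~ In v ks -> assoc (drop_keys ks s) v = assoc s v.
Proof.
  intros H. induction s as [|[a b] s IH]; simpl; auto.
  unfold drop_keys in *. simpl.
  destruct (existsb (Nat.eqb a) ks) eqn:E; simpl.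
  - destruct (Nat.eqb a v) eqn:E2; auto.
    apply Nat.eqb_eq in E2. subst. apply existsb_eqb_In in E. contradiction.
  - destruct (Nat.eqb a v); auto.
Qed.

Lemma drop_keys_nil ks : drop_keys ks [] = [].
Proof. reflexivity. Qed.

Lemma subst_term_ext s1 s2 t : (forall v, In v (tvars t) -> assoc s1 v = assoc s2 v) ->
  subst_term s1 t = subst_term s2 t.
Proof.
  induction t using term_ind'; intros Hs.
  - simpl. f_equal. apply Hs. simpl; auto.
  - rewrite !subst_App. rewrite tvars_App in Hs. f_equal.
    + apply IHt1. intros; apply Hs; apply in_or_app; auto.
    + apply IHt2. intros; apply Hs; apply in_or_app; right; apply in_or_app; auto.
    + assert (Hs' : forall v, In v (tvars_list ms) -> assoc s1 v = assoc s2 v).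
      { intros; apply Hs; apply in_or_app; right; apply in_or_app; auto. }
      clear Hs. induction H; simpl; auto. rewrite tvars_list_cons in Hs'. f_equal.
      * apply H. intros; apply Hs'; apply in_or_app; auto.
      * apply IHForall. intros; apply Hs'; apply in_or_app; auto.
Qed.

Lemma subst_ext :
  (forall v s1 s2, (forall x, In x (fv_val v) -> assoc s1 x = assoc s2 x) -> subst_val s1 v = subst_val s2 v) /\
  (forall d s1 s2, (forall x, In x (fv_decl d) -> assoc s1 x = assoc s2 x) -> subst_decl s1 d = subst_decl s2 d).
Proof.
  apply (vd_mutind (fun v => forall s1 s2, (forall x, In x (fv_val v) -> assoc s1 x = assoc s2 x) -> subst_val s1 v = subst_val s2 v)
                  (fun d => forall s1 s2, (forall x, In x (fv_decl d) -> assoc s1 x = assoc s2 x) -> subst_decl s1 d = subst_decl s2 d)); simpl; intros.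
  - reflexivity.
  - f_equal. apply H. intros x Hx.
    destruct (in_dec Nat.eq_dec x (y :: ys)).
    + rewrite !assoc_drop_in; auto.
    + rewrite !assoc_drop_notin; auto. apply H0. apply In_remove_all. auto.
  - f_equal.
    + apply H. intros; apply H1; apply in_or_app; auto.
    + apply H0. intros x0 Hx.
      destruct (Nat.eq_dec x0 x).
      * subst. rewrite !assoc_drop_in; simpl; auto.
      * rewrite !assoc_drop_notin; simpl; try (intuition congruence). apply H1. apply in_or_app. right.
        apply In_remove_all. simpl. split; auto. intros [E|E]; [congruence|contradiction].
  - f_equal. apply subst_term_ext. auto.
Qed.

Lemma subst_term_nil t : subst_term [] t = t.
Proof.
  induction t using term_ind'; [reflexivity|].
  rewrite subst_App. f_equal; auto. induction H; simpl; f_equal; auto.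
Qed.

Lemma subst_nil :
  (forall v, subst_val [] v = v) /\ (forall d, subst_decl [] d = d).
Proof.
  apply (vd_mutind (fun v => subst_val [] v = v) (fun d => subst_decl [] d = d)); intros.
  - reflexivity.
  - simpl. unfold drop_keys. simpl. f_equal. exact H.
  - simpl. unfold drop_keys. simpl. f_equal; [exact H| exact H0].
  - simpl. f_equal. apply subst_term_nil.
Qed.

Lemma subst_decl_id s d : (forall x, In x (fv_decl d) -> assoc s x = x) -> subst_decl s d = d.
Proof.
  intros H. transitivity (subst_decl [] d); [|apply subst_nil]. apply subst_ext. auto.
Qed.

Lemma subst_term_id s t : (forall x, In x (tvars t) -> assoc s x = x) -> subst_term s t = t.
Proof.
  intros H. transitivity (subst_term [] t); [|apply subst_term_nil]. apply subst_term_ext. auto.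
Qed.

Lemma tvars_subst s t : tvars (subst_term s t) = map (assoc s) (tvars t).
Proof.
  induction t using term_ind'; [reflexivity|].
  rewrite subst_App, !tvars_App, !map_app. f_equal; auto. f_equal; auto.
  induction H; simpl; auto. rewrite map_app. f_equal; auto.
Qed.

Lemma tvars_list_subst s l : tvars_list (map (subst_term s) l) = map (assoc s) (tvars_list l).
Proof. induction l; simpl; auto. rewrite map_app, tvars_subst. f_equal. auto. Qed.

Lemma bv_subst :
  (forall v s, bv_val (subst_val s v) = bv_val v) /\ (forall d s, bv_decl (subst_decl s d) = bv_decl d).
Proof.
  apply (vd_mutind (fun v => forall s, bv_val (subst_val s v) = bv_val v) (fun d => forall s, bv_decl (subst_decl s d) = bv_decl d)); simpl; intros; auto.
  - rewrite H; auto.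
  - rewrite H, H0. auto.
Qed.

Lemma fv_subst :
  (forall v s w, In w (fv_val (subst_val s v)) -> exists x, In x (fv_val v) /\ w = assoc s x) /\
  (forall d s w, In w (fv_decl (subst_decl s d)) -> exists x, In x (fv_decl d) /\ w = assoc s x).
Proof.
  apply (vd_mutind (fun v => forall s w, In w (fv_val (subst_val s v)) -> exists x, In x (fv_val v) /\ w = assoc s x)
                  (fun d => forall s w, In w (fv_decl (subst_decl s d)) -> exists x, In x (fv_decl d) /\ w = assoc s x)); simpl; intros.
  - contradiction.
  - apply In_remove_all in H0. destruct H0 as [H1 H2].
    destruct (H _ _ H1) as [x [Hx E]].
    destruct (in_dec Nat.eq_dec x (y :: ys)).
    + rewrite assoc_drop_in in E; auto. subst. contradiction.
    + rewrite assoc_drop_notin in E; auto. exists x. split; auto. apply In_remove_all. auto.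
  - apply in_app_or in H1. destruct H1 as [H1|H1].
    + destruct (H _ _ H1) as [x0 [? ?]]. exists x0. split; auto. apply in_or_app. auto.
    + apply In_remove_all in H1. destruct H1 as [H1 H2].
      destruct (H0 _ _ H1) as [x0 [Hx E]].
      destruct (Nat.eq_dec x0 x).
      * subst. rewrite assoc_drop_in in H2; simpl; auto. exfalso; apply H2; simpl; auto.
      * rewrite assoc_drop_notin in E; simpl; [|intuition].
        exists x0. split; auto. apply in_or_app. right. apply In_remove_all. simpl. intuition.
  - rewrite tvars_subst in H. apply in_map_iff in H. destruct H as [x [E H]]. eauto.
Qed.

Lemma assoc_in_range s v : assoc s v = v \/ In (assoc s v) (map snd s).
Proof.
  induction s as [|[a b] s IH]; simpl; auto.
  destruct (Nat.eqb a v); auto. destruct IH; auto.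
Qed.

Lemma combine_app' {A B} (l1 l2 : list A) (l1' l2' : list B) : length l1 = length l1' ->
  combine (l1 ++ l2) (l1' ++ l2') = combine l1 l1' ++ combine l2 l2'.
Proof. revert l1'. induction l1; destruct l1'; simpl; intros; try discriminate; auto. f_equal. auto. Qed.

Lemma subst_of_snoc l l' a b : length l = length l' ->
  subst_of (l ++ [a]) (l' ++ [b]) = (a, b) :: subst_of l l'.
Proof.
  intros H. unfold subst_of. rewrite combine_app' by auto. simpl. rewrite rev_app_distr. reflexivity.
Qed.

Lemma map_snd_subst_of l l' : length l = length l' -> map snd (subst_of l l') = rev l'.
Proof.
  intros H. unfold subst_of. rewrite map_rev. f_equal.
  revert l' H. induction l; destruct l'; simpl; intros; try discriminate; auto.
  f_equal. auto.
Qed.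

Lemma assoc_subst_of_range l l' v : length l = length l' ->
  assoc (subst_of l l') v = v \/ In (assoc (subst_of l l') v) l'.
Proof.
  intros H. destruct (assoc_in_range (subst_of l l') v); auto.
  rewrite map_snd_subst_of in H0 by auto. right. apply in_rev. auto.
Qed.

Lemma tvars_Var x : tvars (Var x) = [x].
Proof. reflexivity. Qed.
Global Arguments tvars_list : simpl never.
Global Arguments tvars : simpl never.
Lemma tvars_list_nil : tvars_list [] = [].
Proof. reflexivity. Qed.
Global Hint Rewrite tvars_App tvars_Var tvars_list_cons tvars_list_nil tvars_list_app tvars_list_mapVar : tv.

Inductive capp : list var -> list term -> var -> decl -> Prop :=
| ca_nil : forall x xs k, capp (x :: xs) [] k (Ret (mkApp (Var x) (map Var (xs ++ [k]))))
| ca_var : forall acc v rest k C, capp (acc ++ [v]) rest k C -> capp acc (Var v :: rest) k C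
| ca_app : forall acc m m1 ms rest k y k' C1 C2,
    ~ In y (k :: acc ++ tvars_list rest) ->
    ~ In k' (tvars_list (m :: m1 :: ms)) ->
    capp (acc ++ [y]) rest k C1 ->
    capp [] (m :: m1 :: ms) k' C2 ->
    capp acc (App m m1 ms :: rest) k (Let k' (Lam y [] C1) C2).

Inductive cterm : term -> var -> decl -> Prop :=
| ct_var : forall x k, cterm (Var x) k (Ret (App (Var k) (Var x) []))
| ct_app : forall m m1 ms k C, capp [] (m :: m1 :: ms) k C -> cterm (App m m1 ms) k C.

Inductive cval : val -> val -> Prop :=
| rv_star : cval Star Star
| rv_lam : forall y ys d k0 C, ~ In k0 (y :: ys) -> ~ In k0 (fv_decl d) -> cdcl d k0 C ->
    cval (Lam y ys d) (Lam y (ys ++ [k0]) C)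
with cdcl : decl -> var -> decl -> Prop :=
| rd_ret : forall m k C, cterm m k C -> cdcl (Ret m) k C
| rd_let : forall x v d k V C, x <> k -> cval v V -> cdcl d k C -> cdcl (Let x v d) k (Let x V C).
Scheme cval_ind2 := Induction for cval Sort Prop with cdcl_ind2 := Induction for cdcl Sort Prop.
Combined Scheme cvd_mutind from cval_ind2, cdcl_ind2.

Lemma lsize_cons t l : lsize (t :: l) = size t + lsize l.
Proof. reflexivity. Qed.

Lemma tvars_mkApp_vars x l : tvars (mkApp (Var x) (map Var l)) = x :: l.
Proof. destruct l as [|a l]; [reflexivity|].
  change (tvars (App (Var x) (Var a) (map Var l)) = x :: a :: l). rewrite tvars_App, tvars_list_mapVar. reflexivity. Qed.

Lemma subst_mkApp_vars s x l : subst_term s (mkApp (Var x) (map Var l)) = mkApp (Var (assoc s x)) (map Var (map (assoc s) l)).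
Proof.
  destruct l as [|a l]; [reflexivity|].
  change (subst_term s (App (Var x) (Var a) (map Var l)) = App (Var (assoc s x)) (Var (assoc s a)) (map Var (map (assoc s) l))).
  rewrite subst_App. f_equal. rewrite !map_map. reflexivity.
Qed.

Lemma map_assoc_id s l : (forall v, In v l -> assoc s v = v) -> map (assoc s) l = l.
Proof. induction l; simpl; intros; auto. f_equal; auto. Qed.

Lemma map_subst_id s l : (forall v, In v (tvars_list l) -> assoc s v = v) -> map (subst_term s) l = l.
Proof.
  induction l; simpl; intros; auto. f_equal.
  - apply subst_term_id. intros; apply H; apply in_or_app; auto.
  - apply IHl. intros; apply H; apply in_or_app; auto.
Qed.

Lemma map_subst_ext s1 s2 l : (forall v, In v (tvars_list l) -> assoc s1 v = assoc s2 v) ->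
  map (subst_term s1) l = map (subst_term s2) l.
Proof.
  induction l; simpl; intros; auto. f_equal.
  - apply subst_term_ext. intros; apply H; apply in_or_app; auto.
  - apply IHl. intros; apply H; apply in_or_app; auto.
Qed.

Lemma map_assoc_ext s1 s2 l : (forall v, In v l -> assoc s1 v = assoc s2 v) ->
  map (assoc s1) l = map (assoc s2) l.
Proof. induction l; simpl; intros; auto. f_equal; auto. Qed.

Lemma assoc1 a b v : assoc [(a, b)] v = if Nat.eqb a v then b else v.
Proof. reflexivity. Qed.

Lemma ak_ret_vars x l : l <> [] -> ak_decl (Ret (mkApp (Var x) (map Var l))).
Proof. destruct l; [congruence|]. intros _. simpl. eauto. Qed.

Lemma capp_ak acc rest k C : capp acc rest k C -> ak_decl C.
Proof.
  induction 1; simpl; auto.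
  - apply ak_ret_vars. destruct xs; simpl; congruence.
Qed.

Lemma cvd_ak : (forall v V, cval v V -> ak_val V) /\ (forall d k C, cdcl d k C -> ak_decl C).
Proof.
  apply cvd_mutind; simpl; intros; auto.
  destruct c as [x k'|m' m1 ms k' C' Hc]; [simpl; exists k', x, []; reflexivity | eapply capp_ak; eauto].
Qed.

Lemma ak_subst : (forall v, ak_val v -> forall s, ak_val (subst_val s v)) /\ (forall d, ak_decl d -> forall s, ak_decl (subst_decl s d)).
Proof.
  apply (vd_mutind (fun v => ak_val v -> forall s, ak_val (subst_val s v)) (fun d => ak_decl d -> forall s, ak_decl (subst_decl s d))); simpl; intros; auto.
  - destruct H1; split; auto.
  - destruct H as [x [y [ys E]]]. subst. rewrite subst_App. simpl.
    exists (assoc s x), (assoc s y), (map (assoc s) ys). f_equal. rewrite !map_map. reflexivity.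
Qed.

Lemma capp_fv acc rest k C : capp acc rest k C -> forall w, In w (fv_decl C) -> In w (k :: acc ++ tvars_list rest).
Proof.
  induction 1; intros w Hw.
  - simpl in Hw. rewrite tvars_mkApp_vars in Hw. simpl in Hw |- *.
    destruct Hw as [Hw|Hw]; [right; left; auto|].
    apply in_app_or in Hw. destruct Hw as [Hw|[Hw|[]]]; auto. right; right; rewrite app_nil_r; auto.
  - apply IHcapp in Hw. simpl in *. rewrite <- app_assoc in Hw. simpl in Hw. auto.
  - simpl in Hw. apply in_app_or in Hw. destruct Hw as [Hw|Hw].
    + apply In_remove_all in Hw. destruct Hw as [Hw Hn]. apply IHcapp1 in Hw.
      simpl in Hw |- *. rewrite <- app_assoc in Hw. simpl in Hw.
      destruct Hw as [Hw|Hw]; auto. right.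
      apply in_app_or in Hw. destruct Hw as [Hw|[Hw|Hw]]; [apply in_or_app; auto| exfalso; apply Hn; simpl; auto|].
      apply in_or_app. right. rewrite tvars_list_cons, tvars_App. apply in_or_app. right. auto.
    + apply In_remove_all in Hw. destruct Hw as [Hw Hn]. apply IHcapp2 in Hw.
      simpl in Hw. destruct Hw as [Hw|Hw]; [exfalso; apply Hn; simpl; auto|].
      right. apply in_or_app. right. rewrite tvars_list_cons. apply in_or_app. left.
      rewrite tvars_App. rewrite !tvars_list_cons in Hw. exact Hw.
Qed.

Lemma cterm_fv m k C : cterm m k C -> forall w, In w (fv_decl C) -> w = k \/ In w (tvars m).
Proof.
  destruct 1; intros w Hw.
  - simpl in Hw. autorewrite with tv in Hw. simpl in Hw. rewrite tvars_Var. simpl. intuition.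
  - apply (capp_fv _ _ _ _ H) in Hw. simpl in Hw. autorewrite with tv in *. simpl in Hw. destruct Hw; [left; congruence|right; auto].
Qed.

Lemma cvd_fv : (forall v V, cval v V -> forall w, In w (fv_val V) -> In w (fv_val v)) /\
               (forall d k C, cdcl d k C -> forall w, In w (fv_decl C) -> w = k \/ In w (fv_decl d)).
Proof.
  apply cvd_mutind; simpl; intros; auto.
  - apply In_remove_all in H0. destruct H0 as [H1 H2]. apply H in H1. destruct H1.
    + subst. exfalso. apply H2. simpl. right. apply in_or_app. simpl; auto.
    + apply In_remove_all. split; auto. intros Hc; apply H2. simpl in Hc |- *. destruct Hc; auto.
      right; apply in_or_app; auto.
  - eapply cterm_fv; eauto.
  - apply in_app_or in H1. destruct H1 as [H1|H1].
    + right. apply in_or_app. auto.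
    + apply In_remove_all in H1. destruct H1 as [H1 H2]. apply H0 in H1. destruct H1; auto.
      right. apply in_or_app. right. apply In_remove_all. auto.
Qed.

Definition sok (s : list (var * var)) (l : list var) := forall b, In b l -> forall v, v <> b -> assoc s v <> b.

Lemma sok_drop s l ks : sok s l -> sok (drop_keys ks s) l.
Proof.
  intros H b Hb v Hv. destruct (in_dec Nat.eq_dec v ks).
  - rewrite assoc_drop_in; auto.
  - rewrite assoc_drop_notin; auto.
Qed.

Lemma sok_sub s l l' : sok s l -> (forall b, In b l' -> In b l) -> sok s l'.
Proof. intros H H' b Hb. apply H. auto. Qed.

Lemma capp_subst acc rest k C : capp acc rest k C -> forall s, sok s (bv_decl C) ->
  capp (map (assoc s) acc) (map (subst_term s) rest) (assoc s k) (subst_decl s C).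
Proof.
  induction 1; intros s Hs.
  - simpl. rewrite subst_mkApp_vars, map_app. simpl. constructor.
  - simpl. constructor. specialize (IHcapp s Hs). rewrite map_app in IHcapp. exact IHcapp.
  - simpl in Hs.
    assert (Hy : In y (bv_decl (Let k' (Lam y [] C1) C2))) by (simpl; auto).
    assert (Hk : In k' (bv_decl (Let k' (Lam y [] C1) C2))) by (simpl; auto).
    change (subst_decl s (Let k' (Lam y [] C1) C2)) with
      (Let k' (Lam y [] (subst_decl (drop_keys [y] s) C1)) (subst_decl (drop_keys [k'] s) C2)).
    cbn [map]. rewrite subst_App.
    assert (E1 : map (assoc (drop_keys [y] s)) (acc ++ [y]) = map (assoc s) acc ++ [y]).
    { rewrite map_app. simpl. rewrite assoc_drop_in by (simpl; auto). f_equal.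
      apply map_assoc_ext. intros v Hv. apply assoc_drop_notin. simpl. intros [E|[]]; subst; apply H; simpl; right; apply in_or_app; auto. }
    assert (E2 : map (subst_term (drop_keys [y] s)) rest = map (subst_term s) rest).
    { apply map_subst_ext. intros v Hv. apply assoc_drop_notin. simpl. intros [E|[]]; subst; apply H; simpl; right; apply in_or_app; auto. }
    assert (E3 : assoc (drop_keys [y] s) k = assoc s k).
    { apply assoc_drop_notin. simpl. intros [E|[]]; subst; apply H; simpl; auto. }
    assert (E4 : map (subst_term (drop_keys [k'] s)) (m :: m1 :: ms) = map (subst_term s) (m :: m1 :: ms)).
    { apply map_subst_ext. intros v Hv. apply assoc_drop_notin. simpl. intros [E|[]]; subst; auto. }
    assert (E5 : assoc (drop_keys [k'] s) k' = k') by (apply assoc_drop_in; simpl; auto).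
    specialize (IHcapp1 (drop_keys [y] s)). specialize (IHcapp2 (drop_keys [k'] s)).
    rewrite E1, E2, E3 in IHcapp1. rewrite E4, E5 in IHcapp2. simpl in IHcapp2.
    apply ca_app; auto.
    + simpl. rewrite tvars_list_subst. intros [Hc|Hc].
      * eapply (Hs y Hy k); [|exact Hc]. intro Heq; subst k; apply H; simpl; auto.
      * apply in_app_or in Hc. destruct Hc as [Hc|Hc]; apply in_map_iff in Hc; destruct Hc as [v [Ev Hv]];
          (eapply (Hs y Hy v); [|exact Ev]); intro Heq; subst v; apply H; simpl; right; apply in_or_app; auto.
    + rewrite <- map_cons, <- map_cons, tvars_list_subst. intros Hc. apply in_map_iff in Hc.
      destruct Hc as [v [Ev Hv]]. eapply (Hs k' Hk v); [|exact Ev]. intro Heq; subst v; auto.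
    + apply IHcapp1. apply sok_drop. eapply sok_sub; eauto. intros; simpl; right; right; apply in_or_app; auto.
    + apply IHcapp2. apply sok_drop. eapply sok_sub; eauto. intros; simpl; right; right; apply in_or_app; auto.
Qed.

Lemma cterm_subst m k C : cterm m k C -> forall s, sok s (bv_decl C) ->
  cterm (subst_term s m) (assoc s k) (subst_decl s C).
Proof.
  destruct 1; intros s Hs.
  - simpl. constructor.
  - rewrite subst_App. constructor. apply (capp_subst _ _ _ _ H s Hs).
Qed.

Lemma cvd_subst :
  (forall v V, cval v V -> forall s, sok s (bv_val V) -> cval (subst_val s v) (subst_val s V)) /\
  (forall d k C, cdcl d k C -> forall s, sok s (bv_decl C) -> cdcl (subst_decl s d) (assoc s k) (subst_decl s C)).
Proof.
  apply cvd_mutind; intros.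
  - constructor.
  - simpl. simpl in H0.
    assert (Hk : In k0 (y :: (ys ++ [k0]) ++ bv_decl C)) by (simpl; right; apply in_or_app; left; apply in_or_app; simpl; auto).
    specialize (H (drop_keys (y :: ys ++ [k0]) s)).
    rewrite assoc_drop_in in H by (simpl; right; apply in_or_app; simpl; auto).
    assert (E : subst_decl (drop_keys (y :: ys ++ [k0]) s) d = subst_decl (drop_keys (y :: ys) s) d).
    { apply subst_ext. intros x Hx. destruct (in_dec Nat.eq_dec x (y :: ys)) as [i|ni].
      - rewrite (assoc_drop_in (y :: ys ++ [k0])), (assoc_drop_in (y :: ys)); auto.
        simpl in i |- *. destruct i; auto. right. apply in_or_app. auto.
      - rewrite !assoc_drop_notin; auto. simpl. intros [E|E]; [apply ni; simpl; auto|].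
        apply in_app_or in E. destruct E as [E|[E|[]]]; [apply ni; simpl; auto| subst; contradiction]. }
    rewrite E in H. constructor; auto.
    + intros Hc. apply fv_subst in Hc. destruct Hc as [x [Hx Ex]].
      destruct (in_dec Nat.eq_dec x (y :: ys)) as [i|ni].
      * rewrite assoc_drop_in in Ex; auto. subst. contradiction.
      * rewrite assoc_drop_notin in Ex; auto. eapply (H0 k0 Hk x); [|exact (eq_sym Ex)]. intro Heq; subst x; contradiction.
    + apply H. apply sok_drop. eapply sok_sub; eauto. intros; simpl; right; apply in_or_app; auto.
  - simpl. constructor. apply cterm_subst; auto.
  - simpl. simpl in H1.
    assert (E : assoc (drop_keys [x] s) k = assoc s k) by (apply assoc_drop_notin; simpl; intuition).
    constructor.
    + intro Hc. apply (H1 x (or_introl eq_refl) k); auto.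
    + apply H. eapply sok_sub; eauto. intros; simpl; right; apply in_or_app; auto.
    + rewrite <- E. apply H0. apply sok_drop. eapply sok_sub; eauto. intros; simpl; right; apply in_or_app; auto.
Qed.

Lemma av_let_d x v d w : In w (allvars_decl d) -> In w (allvars_decl (Let x v d)).
Proof.
  unfold allvars_decl. simpl. intros H. apply in_app_or in H. destruct H as [H|H].
  - destruct (Nat.eq_dec w x).
    + subst. apply in_or_app. right. simpl. auto.
    + apply in_or_app. left. apply in_or_app. right. apply In_remove_all. simpl. intuition.
  - apply in_or_app. right. simpl. right. apply in_or_app. auto.
Qed.

Lemma av_let_v x v d w : In w (allvars_val v) -> In w (allvars_decl (Let x v d)).
Proof.
  unfold allvars_decl, allvars_val. simpl. intros H. apply in_app_or in H. destruct H as [H|H].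
  - apply in_or_app. left. apply in_or_app. auto.
  - apply in_or_app. right. simpl. right. apply in_or_app. auto.
Qed.

Lemma av_let_x x v d : In x (allvars_decl (Let x v d)).
Proof. unfold allvars_decl. simpl. apply in_or_app. right. simpl. auto. Qed.

Lemma av_lam y ys d w : In w (allvars_decl d) -> In w (allvars_val (Lam y ys d)).
Proof.
  unfold allvars_decl, allvars_val. simpl. intros H. apply in_app_or in H. destruct H as [H|H].
  - destruct (in_dec Nat.eq_dec w (y :: ys)).
    + apply in_or_app. right. simpl in i |- *. destruct i; auto. right. apply in_or_app. auto.
    + apply in_or_app. left. apply In_remove_all. auto.
  - apply in_or_app. right. simpl. right. apply in_or_app. auto.
Qed.

Lemma av_lam_params y ys d w : In w (y :: ys) -> In w (allvars_val (Lam y ys d)).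
Proof.
  unfold allvars_val. simpl. intros H. apply in_or_app. right. simpl in H |- *.
  destruct H; auto. right. apply in_or_app. auto.
Qed.

Lemma fv_in_av d w : In w (fv_decl d) -> In w (allvars_decl d).
Proof. unfold allvars_decl. intros. apply in_or_app. auto. Qed.
Lemma bv_in_av d w : In w (bv_decl d) -> In w (allvars_decl d).
Proof. unfold allvars_decl. intros. apply in_or_app. auto. Qed.

Lemma fresh_sub l l' : (forall x, In x l' -> In x l) -> ~ In (fresh l) l'.
Proof. intros H Hc. apply H in Hc. apply fresh_notin in Hc. auto. Qed.

Lemma fresh_ge_sub l l' z : fresh l <= z -> (forall x, In x l' -> In x l) -> ~ In z l'.
Proof. intros Hz H Hc. apply H in Hc. apply fresh_gt in Hc. lia. Qed.

Lemma sok1 y w l : ~ In w l -> sok [(y, w)] l.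
Proof.
  intros H b Hb v Hv. rewrite assoc1. destruct (Nat.eqb y v); auto. intro; subst; auto.
Qed.

Lemma capp_ren_acc acc y rest k C w : capp (acc ++ [y]) rest k C -> ~ In y (k :: acc ++ tvars_list rest) ->
  ~ In w (bv_decl C) -> capp (acc ++ [w]) rest k (subst_decl [(y, w)] C).
Proof.
  intros H Hy Hw. pose proof (capp_subst _ _ _ _ H [(y, w)] (sok1 _ _ _ Hw)) as H'.
  rewrite map_app in H'. cbn [map] in H'. rewrite (assoc1 y w y), Nat.eqb_refl in H'.
  rewrite map_assoc_id in H'.
  2:{ intros v Hv. rewrite assoc1. destruct (Nat.eqb y v) eqn:E; auto. apply Nat.eqb_eq in E. subst.
      exfalso; apply Hy; simpl; right; apply in_or_app; auto. }
  rewrite map_subst_id in H'.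
  2:{ intros v Hv. rewrite assoc1. destruct (Nat.eqb y v) eqn:E; auto. apply Nat.eqb_eq in E. subst.
      exfalso; apply Hy; simpl; right; apply in_or_app; auto. }
  rewrite (assoc1 y w k) in H'. destruct (Nat.eqb y k) eqn:E.
  - apply Nat.eqb_eq in E. subst. exfalso; apply Hy; simpl; auto.
  - exact H'.
Qed.

Lemma capp_ren_k acc rest k C w : capp acc rest k C -> ~ In k (acc ++ tvars_list rest) ->
  ~ In w (bv_decl C) -> capp acc rest w (subst_decl [(k, w)] C).
Proof.
  intros H Hk Hw. pose proof (capp_subst _ _ _ _ H [(k, w)] (sok1 _ _ _ Hw)) as H'.
  rewrite (assoc1 k w k), Nat.eqb_refl in H'.
  rewrite map_assoc_id in H'.
  2:{ intros v Hv. rewrite assoc1. destruct (Nat.eqb k v) eqn:E; auto. apply Nat.eqb_eq in E. subst.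
      exfalso; apply Hk; apply in_or_app; auto. }
  rewrite map_subst_id in H'.
  2:{ intros v Hv. rewrite assoc1. destruct (Nat.eqb k v) eqn:E; auto. apply Nat.eqb_eq in E. subst.
      exfalso; apply Hk; apply in_or_app; auto. }
  exact H'.
Qed.

Lemma lsize_inner m m1 ms : lsize (m :: m1 :: ms) < size (App m m1 ms).
Proof. rewrite size_App. rewrite !lsize_cons. lia. Qed.

Lemma capp_unique : forall n acc rest k C1 C2, lsize rest < n ->
  capp acc rest k C1 -> capp acc rest k C2 -> cong_decl C1 C2.
Proof.
  induction n; intros acc rest k C1 C2 Hn H1 H2; [lia|].
  destruct H1 as [x xs k|acc v rest k C1 H1|acc m m1 ms rest k y1 k1 A1 B1 Hy1 Hk1 HA1 HB1].
  - inversion H2; subst. apply cd_refl.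
  - inversion H2; subst. eapply IHn; eauto. rewrite lsize_cons in Hn. pose proof (size_pos (Var v)); lia.
  - inversion H2 as [| |acc' m' m1' ms' rest' k' y2 k2 A2 B2 Hy2 Hk2 HA2 HB2]; subst.
    rewrite lsize_cons in Hn. pose proof (lsize_inner m m1 ms) as Hin.
    pose proof (size_pos (App m m1 ms)).
    set (w := fresh (allvars_decl A1 ++ allvars_decl A2)).
    assert (Hw1 : ~ In w (allvars_decl A1)) by (apply fresh_sub; intros; apply in_or_app; auto).
    assert (Hw2 : ~ In w (allvars_decl A2)) by (apply fresh_sub; intros; apply in_or_app; auto).
    assert (HL : cong_val (Lam y1 [] A1) (Lam y2 [] A2)).
    { eapply cv_trans.
      - apply (cv_alpha y1 [] w [] A1).
        + constructor; auto. constructor.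
        + reflexivity.
        + intros u [Hu|[]]. subst. auto.
      - eapply cv_trans; [|apply cv_sym; apply (cv_alpha y2 [] w [] A2)].
        + apply cv_lam. simpl. unfold subst_of. simpl.
          eapply IHn; [|apply capp_ren_acc; eauto| apply capp_ren_acc; eauto]; try lia.
          * intro; apply Hw1; apply bv_in_av; auto.
          * intro; apply Hw2; apply bv_in_av; auto.
        + constructor; auto. constructor.
        + reflexivity.
        + intros u [Hu|[]]. subst. auto. }
    set (w' := fresh (allvars_decl B1 ++ allvars_decl B2 ++ tvars_list (m :: m1 :: ms))).
    assert (Hw1' : ~ In w' (allvars_decl B1)) by (apply fresh_sub; intros; apply in_or_app; auto).
    assert (Hw2' : ~ In w' (allvars_decl B2)) by (apply fresh_sub; intros; apply in_or_app; right; apply in_or_app; auto).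
    eapply cd_trans; [apply cd_let_v; exact HL|].
    eapply cd_trans; [apply (cd_alpha k1 w'); auto|].
    eapply cd_trans; [|apply cd_sym; apply (cd_alpha k2 w'); auto].
    apply cd_let_d. eapply IHn; [|apply capp_ren_k; eauto| apply capp_ren_k; eauto]; try lia.
    + intro; apply Hw1'; apply bv_in_av; auto.
    + intro; apply Hw2'; apply bv_in_av; auto.
Qed.

Lemma cterm_unique m k C1 C2 : cterm m k C1 -> cterm m k C2 -> cong_decl C1 C2.
Proof.
  destruct 1; intros H2; inversion H2; subst.
  - apply cd_refl.
  - eapply capp_unique; eauto.
Qed.

Fixpoint vsz (v : val) : nat :=
  match v with Star => 0 | Lam _ _ d => S (dsz d) end
with dsz (d : decl) : nat :=
  match d with Let _ v d => S (vsz v + dsz d) | Ret _ => 0 end.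

Lemma sz_subst : (forall v s, vsz (subst_val s v) = vsz v) /\ (forall d s, dsz (subst_decl s d) = dsz d).
Proof.
  apply (vd_mutind (fun v => forall s, vsz (subst_val s v) = vsz v) (fun d => forall s, dsz (subst_decl s d) = dsz d));
    simpl; intros; auto.
Qed.

Lemma seq_split w n : seq w (S (S n)) = w :: seq (S w) n ++ [S w + n].
Proof. change (seq w (S (S n))) with (w :: seq (S w) (S n)). rewrite seq_S. reflexivity. Qed.

Lemma cvd_unique : forall n,
  (forall v, vsz v < n -> forall V1 V2, cval v V1 -> cval v V2 -> cong_val V1 V2) /\
  (forall d, dsz d < n -> forall k C1 C2, cdcl d k C1 -> cdcl d k C2 -> cong_decl C1 C2).
Proof.
  induction n; [split; intros; lia|]. destruct IHn as [IHv IHd]. split.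
  - intros v Hv V1 V2 H1 H2. destruct H1 as [|y ys d k1 C1 Hk1 Hk1' HC1].
    + inversion H2; subst. apply cv_refl.
    + inversion H2 as [|y' ys' d' k2 C2 Hk2 Hk2' HC2]; subst.
      simpl in Hv.
      set (L := allvars_decl C1 ++ allvars_decl C2 ++ fv_decl d ++ y :: ys ++ [k1; k2]).
      set (w := fresh L).
      set (ws0 := seq (S w) (length ys)).
      set (wl := S w + length ys).
      assert (Hseq : w :: ws0 ++ [wl] = seq w (S (S (length ys)))) by (symmetry; apply seq_split).
      assert (Hnd : NoDup (w :: ws0 ++ [wl])) by (rewrite Hseq; apply seq_NoDup).
      assert (Hge : forall u, In u (w :: ws0 ++ [wl]) -> w <= u).
      { intros u Hu. rewrite Hseq in Hu. apply in_seq in Hu. lia. }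
      assert (Hnot : forall u, In u (w :: ws0 ++ [wl]) -> ~ In u L).
      { intros u Hu. apply Hge in Hu. apply fresh_ge_sub with (l := L); auto. }
      assert (Hlen : length ys = length ws0) by (unfold ws0; rewrite length_seq; auto).
      assert (Hsnoc : forall kk, subst_of (y :: ys ++ [kk]) (w :: ws0 ++ [wl]) = (kk, wl) :: subst_of (y :: ys) (w :: ws0)).
      { intros kk. change (y :: ys ++ [kk]) with ((y :: ys) ++ [kk]). change (w :: ws0 ++ [wl]) with ((w :: ws0) ++ [wl]).
        apply subst_of_snoc. simpl. auto. }
      assert (Hinst : forall kk C, ~ In kk (fv_decl d) -> cdcl d kk C ->
                (forall u, In u (w :: ws0 ++ [wl]) -> ~ In u (allvars_decl C)) ->
                cdcl (subst_decl (subst_of (y :: ys) (w :: ws0)) d) wl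
                     (subst_decl (subst_of (y :: ys ++ [kk]) (w :: ws0 ++ [wl])) C)).
      { intros kk C Hkk HC Hu.
        assert (Hs : sok (subst_of (y :: ys ++ [kk]) (w :: ws0 ++ [wl])) (bv_decl C)).
        { intros b Hb v Hvb. destruct (assoc_subst_of_range (y :: ys ++ [kk]) (w :: ws0 ++ [wl]) v) as [E|E].
          - simpl. rewrite !length_app. unfold ws0. rewrite ?length_seq. simpl. lia.
          - rewrite E. auto.
          - intro Hc. rewrite Hc in E. apply (Hu b E). apply bv_in_av. auto. }
        pose proof (proj2 cvd_subst _ _ _ HC _ Hs) as H'.
        rewrite Hsnoc in H'. simpl in H'. rewrite Nat.eqb_refl in H'.
        rewrite Hsnoc. replace (subst_decl (subst_of (y :: ys) (w :: ws0)) d)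
          with (subst_decl ((kk, wl) :: subst_of (y :: ys) (w :: ws0)) d); [exact H'|].
        apply subst_ext. intros x Hx. simpl.
        destruct (Nat.eqb kk x) eqn:E; auto. apply Nat.eqb_eq in E. subst. contradiction. }
      assert (HF1 : forall u, In u (w :: ws0 ++ [wl]) -> ~ In u (allvars_decl C1)).
      { intros u Hu Hc. apply (Hnot u Hu). unfold L. apply in_or_app; auto. }
      assert (HF2 : forall u, In u (w :: ws0 ++ [wl]) -> ~ In u (allvars_decl C2)).
      { intros u Hu Hc. apply (Hnot u Hu). unfold L. apply in_or_app; right; apply in_or_app; auto. }
      assert (Hl1 : length (ys ++ [k1]) = length (ws0 ++ [wl])) by (rewrite !length_app; simpl; lia).
      assert (Hl2 : length (ys ++ [k2]) = length (ws0 ++ [wl])) by (rewrite !length_app; simpl; lia).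
      eapply cv_trans; [apply (cv_alpha y (ys ++ [k1]) w (ws0 ++ [wl]) C1 Hnd Hl1 HF1)|].
      eapply cv_trans; [|apply cv_sym; apply (cv_alpha y (ys ++ [k2]) w (ws0 ++ [wl]) C2 Hnd Hl2 HF2)].
      apply cv_lam. eapply IHd; [| apply Hinst; eauto | apply Hinst; eauto].
      rewrite (proj2 sz_subst). lia.
  - intros d Hd k C1 C2 H1 H2. destruct H1 as [m k C1 Hm|x v d k V1 C1 Hxk HV1 HC1].
    + inversion H2; subst. eapply cterm_unique; eauto.
    + inversion H2 as [|x' v' d' k' V2 C2' Hxk' HV2 HC2]; subst. simpl in Hd.
      eapply cd_trans; [apply cd_let_v; eapply IHv; eauto; lia|].
      apply cd_let_d. eapply IHd; eauto. lia.
Qed.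

Lemma cdcl_unique d k C1 C2 : cdcl d k C1 -> cdcl d k C2 -> cong_decl C1 C2.
Proof. intros. eapply (proj2 (cvd_unique (S (dsz d)))); eauto. Qed.
Lemma cval_unique v V1 V2 : cval v V1 -> cval v V2 -> cong_val V1 V2.
Proof. intros. eapply (proj1 (cvd_unique (S (vsz v)))); eauto. Qed.

Fixpoint cps_appS (Sv : list var) (n : nat) (acc : list var) (rest : list term) (k : var) : decl :=
  match n with
  | 0 => Ret (Var k)
  | S n' =>
      match rest with
      | [] => match acc with x :: xs => Ret (mkApp (Var x) (map Var (xs ++ [k]))) | [] => Ret (Var k) end
      | Var v :: rest' => cps_appS Sv n' (acc ++ [v]) rest' k
      | App m m1 ms :: rest' =>
          let y := fresh (Sv ++ k :: acc ++ tvars_list rest) in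
          let k' := S y in
          Let k' (Lam y [] (cps_appS Sv n' (acc ++ [y]) rest' k)) (cps_appS Sv n' [] (m :: m1 :: ms) k')
      end
  end.

Definition cps_termS Sv (t : term) (k : var) : decl :=
  match t with
  | Var x => Ret (App (Var k) (Var x) [])
  | App m m1 ms => cps_appS Sv (size t) [] (m :: m1 :: ms) k
  end.

Fixpoint cps_valS Sv (v : val) : val :=
  match v with
  | Star => Star
  | Lam y ys d => let k := fresh (Sv ++ y :: ys ++ allvars_decl d) in Lam y (ys ++ [k]) (cps_declS Sv d k)
  end
with cps_declS Sv (d : decl) (k : var) : decl :=
  match d with
  | Let x v d => Let x (cps_valS Sv v) (cps_declS Sv d k)
  | Ret m => cps_termS Sv m k
  end.

Lemma cps_app_eq n acc rest k : cps_app n acc rest k = cps_appS [] n acc rest k.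
Proof.
  revert acc rest k. induction n; intros acc rest k; [reflexivity|].
  destruct rest as [|t rest]; [reflexivity|]. destruct t; simpl; rewrite ?IHn; reflexivity.
Qed.

Lemma cps_eq : (forall v, cps_val v = cps_valS [] v) /\ (forall d k, cps_decl d k = cps_declS [] d k).
Proof.
  apply (vd_mutind (fun v => cps_val v = cps_valS [] v) (fun d => forall k, cps_decl d k = cps_declS [] d k));
    intros.
  - reflexivity.
  - simpl. rewrite H. reflexivity.
  - simpl. rewrite H, H0. reflexivity.
  - change (cps_term m k = cps_termS [] m k). destruct m; [reflexivity|].
    unfold cps_term, cps_termS. apply cps_app_eq.
Qed.

Lemma capp_exists Sv : forall n acc rest k, lsize rest < n -> (acc <> [] \/ rest <> []) ->
  capp acc rest k (cps_appS Sv n acc rest k) /\ (forall b, In b (bv_decl (cps_appS Sv n acc rest k)) -> ~ In b Sv).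
Proof.
  induction n; intros acc rest k Hn Hne; [lia|].
  destruct rest as [|t rest].
  - destruct acc as [|x xs]; [destruct Hne; congruence|]. simpl. split; [constructor|]. intros b [].
  - rewrite lsize_cons in Hn. pose proof (size_pos t). destruct t as [v|m m1 ms].
    + cbn [cps_appS]. destruct (IHn (acc ++ [v]) rest k) as [H1 H2]; [simpl in Hn; lia| left; destruct acc; simpl; congruence|].
      split; [constructor; auto| auto].
    + cbn zeta. cbn [cps_appS].
      set (y := fresh (Sv ++ k :: acc ++ tvars_list (App m m1 ms :: rest))).
      pose proof (lsize_inner m m1 ms).
      destruct (IHn (acc ++ [y]) rest k) as [H1 B1]; [lia| left; destruct acc; simpl; congruence|].
      destruct (IHn [] (m :: m1 :: ms) (S y)) as [H2 B2]; [lia| right; congruence|].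
      assert (Hy : forall z, In z (Sv ++ k :: acc ++ tvars_list (App m m1 ms :: rest)) -> z < y)
        by (intros; apply fresh_gt; auto).
      split.
      * apply ca_app; auto.
        -- intros Hc. assert (y < y); [|lia]. apply Hy. apply in_or_app. right.
           simpl in Hc |- *. destruct Hc; auto. right. apply in_app_or in H3. apply in_or_app. destruct H3; auto.
           right. rewrite tvars_list_cons. apply in_or_app. auto.
        -- intros Hc. assert (S y < y); [|lia]. apply Hy. apply in_or_app. right. right. apply in_or_app. right.
           rewrite tvars_list_cons. apply in_or_app. left. rewrite tvars_App. rewrite !tvars_list_cons in Hc. exact Hc.
      * simpl. intros b Hb Hbs. destruct Hb as [Hb|[Hb|Hb]].
        -- subst. assert (S y < y); [|lia]. apply Hy. apply in_or_app. auto.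
        -- subst. assert (y < y); [|lia]. apply Hy. apply in_or_app. auto.
        -- apply in_app_or in Hb. destruct Hb; [eapply B1|eapply B2]; eauto.
Qed.

Lemma cterm_exists Sv t k : cterm t k (cps_termS Sv t k) /\ (forall b, In b (bv_decl (cps_termS Sv t k)) -> ~ In b Sv).
Proof.
  destruct t as [x|m m1 ms]; simpl.
  - split; [constructor|]. intros b [].
  - destruct (capp_exists Sv (size (App m m1 ms)) [] (m :: m1 :: ms) k) as [H1 H2].
    + apply lsize_inner.
    + right; congruence.
    + split; auto. constructor. auto.
Qed.

Lemma cvd_exists Sv :
  (forall v, cval v (cps_valS Sv v) /\ (forall b, In b (bv_val (cps_valS Sv v)) -> In b (bv_val v) \/ ~ In b Sv)) /\
  (forall d k, ~ In k (allvars_decl d) -> cdcl d k (cps_declS Sv d k) /\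
     (forall b, In b (bv_decl (cps_declS Sv d k)) -> In b (bv_decl d) \/ ~ In b Sv)).
Proof.
  apply (vd_mutind (fun v => cval v (cps_valS Sv v) /\ (forall b, In b (bv_val (cps_valS Sv v)) -> In b (bv_val v) \/ ~ In b Sv))
     (fun d => forall k, ~ In k (allvars_decl d) -> cdcl d k (cps_declS Sv d k) /\
     (forall b, In b (bv_decl (cps_declS Sv d k)) -> In b (bv_decl d) \/ ~ In b Sv))); intros.
  - simpl. split; [constructor|]. intros b [].
  - cbn [cps_valS]. cbn zeta.
    set (k := fresh (Sv ++ y :: ys ++ allvars_decl d)).
    assert (Hk : forall z, In z (Sv ++ y :: ys ++ allvars_decl d) -> z <> k)
      by (intros z Hz E; subst; apply fresh_notin in Hz; auto).
    destruct (H k) as [H1 H2].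
    { intro Hc. apply (Hk k); auto. apply in_or_app; right; right; apply in_or_app; auto. }
    split.
    + constructor; auto.
      * intro Hc. apply (Hk k); auto. apply in_or_app; right. simpl in Hc |- *. destruct Hc; auto.
        right; apply in_or_app; auto.
      * intro Hc. apply (Hk k); auto. apply in_or_app; right; right; apply in_or_app; right; apply fv_in_av; auto.
    + simpl. intros b Hb. destruct Hb as [Hb|Hb]; [left; auto|].
      apply in_app_or in Hb. destruct Hb as [Hb|Hb].
      * apply in_app_or in Hb. destruct Hb as [Hb|[Hb|[]]]; [left; right; apply in_or_app; auto|].
        right. intro Hc. subst b. apply (Hk k); auto. apply in_or_app; auto.
      * destruct (H2 b Hb); auto. left; right; apply in_or_app; auto.
  - simpl. destruct H as [H1' H2]. destruct (H0 k) as [H3 H4].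
    { intro Hc. apply H1. apply av_let_d. auto. }
    split.
    + constructor; auto. intro E. subst. apply H1. apply av_let_x.
    + intros b [Hb|Hb]; [left; simpl; auto|]. apply in_app_or in Hb. destruct Hb as [Hb|Hb].
      * destruct (H2 b Hb); auto. left; simpl; right; apply in_or_app; auto.
      * destruct (H4 b Hb); auto. left; simpl; right; apply in_or_app; auto.
  - simpl. destruct (cterm_exists Sv m k) as [H1 H2]. split; [constructor; auto|]. intros b Hb. right. auto.
Qed.

Lemma cps_decl_inst d k : ~ In k (allvars_decl d) -> cdcl d k (cps_decl d k).
Proof. intros H. rewrite (proj2 cps_eq). apply (proj2 (cvd_exists [])). auto. Qed.

Lemma cps_val_inst v : cval v (cps_val v).
Proof. rewrite (proj1 cps_eq). apply (proj1 (cvd_exists [])). Qed.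

Lemma cdcl_exists Sv d k : ~ In k (allvars_decl d) -> exists C, cdcl d k C /\
   (forall b, In b (bv_decl C) -> In b (bv_decl d) \/ ~ In b Sv).
Proof. intros H. exists (cps_declS Sv d k). apply (proj2 (cvd_exists Sv)). auto. Qed.

Lemma cval_exists Sv v : exists V, cval v V /\ (forall b, In b (bv_val V) -> In b (bv_val v) \/ ~ In b Sv).
Proof. exists (cps_valS Sv v). apply (proj1 (cvd_exists Sv)). Qed.

Lemma capp_exists' Sv acc rest k : (acc <> [] \/ rest <> []) -> exists C, capp acc rest k C /\
   (forall b, In b (bv_decl C) -> ~ In b Sv).
Proof. intros H. exists (cps_appS Sv (S (lsize rest)) acc rest k). apply capp_exists; auto. Qed.

Fixpoint ren_term (f : var -> var) (t : term) : term :=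
  match t with
  | Var x => Var (f x)
  | App m m1 ms => App (ren_term f m) (ren_term f m1) (map (ren_term f) ms)
  end.

Fixpoint ren_val (f : var -> var) (v : val) : val :=
  match v with
  | Star => Star
  | Lam y ys d => Lam (f y) (map f ys) (ren_decl f d)
  end
with ren_decl (f : var -> var) (d : decl) : decl :=
  match d with
  | Let x v d => Let (f x) (ren_val f v) (ren_decl f d)
  | Ret m => Ret (ren_term f m)
  end.

Definition renp (f : var -> var) (p : var * var) := (f (fst p), f (snd p)).
Definition renl (f : var -> var) (p : var * val) := (f (fst p), ren_val f (snd p)).

Definition lets' (L : list (var * val)) (C : decl) : decl := fold_right (fun p d => Let (fst p) (snd p) d) C L.

Lemma lets'_app a b C : lets' (a ++ b) C = lets' a (lets' b C).
Proof. unfold lets'. apply fold_right_app. Qed.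

Lemma split_lets' ls d : split_decl (lets' ls d) = (ls ++ fst (split_decl d), snd (split_decl d)).
Proof.
  induction ls as [|[x v] ls IH]; simpl.
  - destruct (split_decl d); reflexivity.
  - rewrite IH. reflexivity.
Qed.

Lemma split_inv d : d = lets' (fst (split_decl d)) (Ret (snd (split_decl d))).
Proof.
  induction d as [x v d IH|m]; simpl; auto.
  destruct (split_decl d) as [ls m] eqn:E. simpl in *. f_equal. auto.
Qed.

Lemma lets_eq ls m : lets ls m = lets' ls (Ret m).
Proof. reflexivity. Qed.

Lemma plugD_eq E d : plugD E d = lets' (ec_lets E ++ fst (split_decl d)) (Ret (plug_frames (ec_frames E) (snd (split_decl d)))).
Proof. unfold plugD. destruct (split_decl d); reflexivity. Qed.

Lemma plugD_nof E d : ec_frames E = [] -> plugD E d = lets' (ec_lets E) d.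
Proof.
  intros H. rewrite plugD_eq, H. simpl. rewrite lets'_app. f_equal. symmetry. apply split_inv.
Qed.

Lemma plug_ok_nof E d : ec_frames E = [] -> plug_ok E d.
Proof. intros H. unfold plug_ok. rewrite H. simpl. auto. Qed.

Scheme cong_val_ind2 := Induction for cong_val Sort Prop with cong_decl_ind2 := Induction for cong_decl Sort Prop.
Combined Scheme cong_mutind from cong_val_ind2, cong_decl_ind2.

Section Ren.
Variable f : var -> var.
Hypothesis Hf : forall a b, f a = f b -> a = b.

Lemma In_map_inj x l : In (f x) (map f l) <-> In x l.
Proof.
  split; intros H.
  - apply in_map_iff in H. destruct H as [y [E H]]. apply Hf in E. subst. auto.
  - apply in_map. auto.
Qed.

Lemma eqb_inj a b : Nat.eqb (f a) (f b) = Nat.eqb a b.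
Proof.
  destruct (Nat.eqb a b) eqn:E.
  - apply Nat.eqb_eq in E. subst. apply Nat.eqb_refl.
  - apply Nat.eqb_neq. intro E'. apply Hf in E'. apply Nat.eqb_neq in E. auto.
Qed.

Lemma existsb_inj a ks : existsb (Nat.eqb (f a)) (map f ks) = existsb (Nat.eqb a) ks.
Proof. induction ks; simpl; auto. rewrite eqb_inj, IHks. auto. Qed.

Lemma remove_all_map ks l : remove_all (map f ks) (map f l) = map f (remove_all ks l).
Proof.
  unfold remove_all. induction l; simpl; auto. rewrite existsb_inj.
  destruct (existsb (Nat.eqb a) ks); simpl; f_equal; auto.
Qed.

Lemma tvars_ren t : tvars (ren_term f t) = map f (tvars t).
Proof.
  induction t using term_ind'.
  - reflexivity.
  - change (ren_term f (App t1 t2 ms)) with (App (ren_term f t1) (ren_term f t2) (map (ren_term f) ms)).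
    rewrite !tvars_App, !map_app, IHt1, IHt2. f_equal. f_equal.
    induction H; auto. cbn [map]. rewrite !tvars_list_cons, map_app, H, IHForall. auto.
Qed.

Lemma tvars_list_ren l : tvars_list (map (ren_term f) l) = map f (tvars_list l).
Proof. induction l; auto. cbn [map]. rewrite !tvars_list_cons, map_app, tvars_ren, IHl. auto. Qed.

Lemma vars_ren :
  (forall v, fv_val (ren_val f v) = map f (fv_val v) /\ bv_val (ren_val f v) = map f (bv_val v)) /\
  (forall d, fv_decl (ren_decl f d) = map f (fv_decl d) /\ bv_decl (ren_decl f d) = map f (bv_decl d)).
Proof.
  apply vd_mutind; simpl; intros; auto.
  - destruct H as [H1 H2]. rewrite H1, H2, <- remove_all_map. simpl. rewrite !map_app. auto.
  - destruct H as [H1 H2], H0 as [H3 H4]. rewrite H1, H2, H3, H4, !map_app, <- remove_all_map. auto.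
  - rewrite tvars_ren. auto.
Qed.

Lemma fv_ren d : fv_decl (ren_decl f d) = map f (fv_decl d).
Proof. apply vars_ren. Qed.
Lemma bv_ren d : bv_decl (ren_decl f d) = map f (bv_decl d).
Proof. apply vars_ren. Qed.
Lemma fvv_ren v : fv_val (ren_val f v) = map f (fv_val v).
Proof. apply vars_ren. Qed.
Lemma bvv_ren v : bv_val (ren_val f v) = map f (bv_val v).
Proof. apply vars_ren. Qed.
Lemma av_ren d : allvars_decl (ren_decl f d) = map f (allvars_decl d).
Proof. unfold allvars_decl. rewrite fv_ren, bv_ren, map_app. auto. Qed.

Lemma assoc_ren s v : assoc (map (renp f) s) (f v) = f (assoc s v).
Proof. induction s as [|[a b] s IH]; simpl; auto. rewrite eqb_inj. destruct (Nat.eqb a v); auto. Qed.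

Lemma drop_ren ks s : drop_keys (map f ks) (map (renp f) s) = map (renp f) (drop_keys ks s).
Proof.
  unfold drop_keys. induction s as [|[a b] s IH]; simpl; auto. rewrite existsb_inj.
  destruct (existsb (Nat.eqb a) ks); simpl; f_equal; auto.
Qed.

Lemma subst_term_ren s t : ren_term f (subst_term s t) = subst_term (map (renp f) s) (ren_term f t).
Proof.
  induction t using term_ind'.
  - simpl. rewrite assoc_ren. auto.
  - rewrite subst_App. change (ren_term f (App t1 t2 ms)) with (App (ren_term f t1) (ren_term f t2) (map (ren_term f) ms)).
    rewrite subst_App. cbn [ren_term]. f_equal; auto. rewrite !map_map. apply map_ext_in.
    intros a Ha. rewrite Forall_forall in H. auto.
Qed.

Lemma subst_ren :
  (forall v s, ren_val f (subst_val s v) = subst_val (map (renp f) s) (ren_val f v)) /\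
  (forall d s, ren_decl f (subst_decl s d) = subst_decl (map (renp f) s) (ren_decl f d)).
Proof.
  apply (vd_mutind (fun v => forall s, ren_val f (subst_val s v) = subst_val (map (renp f) s) (ren_val f v))
     (fun d => forall s, ren_decl f (subst_decl s d) = subst_decl (map (renp f) s) (ren_decl f d))); intros; simpl; auto.
  - rewrite H. f_equal. f_equal. change (f y :: map f ys) with (map f (y :: ys)). rewrite drop_ren. auto.
  - rewrite H, H0. f_equal. f_equal. change [f x] with (map f [x]). rewrite drop_ren. auto.
  - f_equal. apply subst_term_ren.
Qed.

Lemma subst_of_ren ys zs : map (renp f) (subst_of ys zs) = subst_of (map f ys) (map f zs).
Proof.
  unfold subst_of. rewrite map_rev. f_equal. revert zs. induction ys; destruct zs; simpl; auto. f_equal. auto.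
Qed.

Lemma ren_lets' ls d : ren_decl f (lets' ls d) = lets' (map (renl f) ls) (ren_decl f d).
Proof. induction ls; simpl; auto. rewrite IHls. auto. Qed.

Lemma NoDup_ren l : NoDup l -> NoDup (map f l).
Proof.
  induction 1; simpl; constructor; auto. rewrite In_map_inj. auto.
Qed.

Lemma cong_ren :
  (forall v w, cong_val v w -> cong_val (ren_val f v) (ren_val f w)) /\
  (forall d e, cong_decl d e -> cong_decl (ren_decl f d) (ren_decl f e)).
Proof.
  apply cong_mutind; intros; simpl.
  - apply cv_refl.
  - apply cv_sym; auto.
  - eapply cv_trans; eauto.
  - apply cv_lam; auto.
  - rewrite (proj2 subst_ren), subst_of_ren. simpl.
    apply (cv_alpha (f y) (map f ys) (f y') (map f ys')).
    + apply (NoDup_ren (y' :: ys')). auto.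
    + rewrite !length_map. auto.
    + intros w Hw. change (f y' :: map f ys') with (map f (y' :: ys')) in Hw.
      apply in_map_iff in Hw. destruct Hw as [u [E Hu]]. subst w. rewrite av_ren, In_map_inj. auto.
  - apply cd_refl.
  - apply cd_sym; auto.
  - eapply cd_trans; eauto.
  - apply cd_let_v; auto.
  - apply cd_let_d; auto.
  - rewrite (proj2 subst_ren). simpl. apply cd_alpha. rewrite av_ren, In_map_inj. auto.
  - apply cd_swap.
    + intro E. apply Hf in E. auto.
    + rewrite fvv_ren, In_map_inj. auto.
    + rewrite fvv_ren, In_map_inj. auto.
  - apply cd_gc. rewrite fv_ren, In_map_inj. auto.
Qed.

Lemma ak_ren : (forall v, ak_val v -> ak_val (ren_val f v)) /\ (forall d, ak_decl d -> ak_decl (ren_decl f d)).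
Proof.
  apply (vd_mutind (fun v => ak_val v -> ak_val (ren_val f v)) (fun d => ak_decl d -> ak_decl (ren_decl f d))); simpl; intros; auto.
  - destruct H1; auto.
  - destruct H as [x [y [ys E]]]. subst. simpl. exists (f x), (f y), (map f ys). rewrite !map_map. auto.
Qed.

Lemma ren_mkApp_vars x l : ren_term f (mkApp (Var x) (map Var l)) = mkApp (Var (f x)) (map Var (map f l)).
Proof. destruct l; simpl; auto. rewrite !map_map. auto. Qed.

Lemma capp_ren acc rest k C : capp acc rest k C -> capp (map f acc) (map (ren_term f) rest) (f k) (ren_decl f C).
Proof.
  induction 1.
  - simpl. rewrite ren_mkApp_vars, map_app. simpl. constructor.
  - simpl. constructor. rewrite map_app in IHcapp. exact IHcapp.
  - simpl. rewrite map_app in IHcapp1. simpl in IHcapp1. apply ca_app; auto.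
    + change (f k :: map f acc ++ tvars_list (map (ren_term f) rest)) with (map f (k :: acc) ++ tvars_list (map (ren_term f) rest)).
      rewrite tvars_list_ren, <- map_app. rewrite In_map_inj. auto.
    + change (ren_term f m :: ren_term f m1 :: map (ren_term f) ms) with (map (ren_term f) (m :: m1 :: ms)).
      rewrite tvars_list_ren, In_map_inj. auto.
Qed.

Lemma cterm_ren m k C : cterm m k C -> cterm (ren_term f m) (f k) (ren_decl f C).
Proof.
  destruct 1; simpl.
  - constructor.
  - constructor. apply (capp_ren _ _ _ _ H).
Qed.

Lemma cvd_ren : (forall v V, cval v V -> cval (ren_val f v) (ren_val f V)) /\ (forall d k C, cdcl d k C -> cdcl (ren_decl f d) (f k) (ren_decl f C)).
Proof.
  apply (cvd_mutind (fun v V _ => cval (ren_val f v) (ren_val f V)) (fun d k C _ => cdcl (ren_decl f d) (f k) (ren_decl f C)));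
    intros; simpl.
  - constructor.
  - rewrite map_app. simpl. constructor; auto.
    + change (f y :: map f ys) with (map f (y :: ys)). rewrite In_map_inj. auto.
    + rewrite fv_ren, In_map_inj. auto.
  - constructor. apply cterm_ren. auto.
  - constructor; auto; intro E; apply Hf in E; auto.
Qed.

Lemma red_ak_ren D1 D2 : red_ak D1 D2 -> red_ak (ren_decl f D1) (ren_decl f D2).
Proof.
  intros [HA1 [HA2 [X1 [X2 [HX1 [HX2 [Hc1 [Hb Hc2]]]]]]]].
  split; [apply ak_ren; auto|]. split; [apply ak_ren; auto|].
  exists (ren_decl f X1), (ren_decl f X2).
  split; [apply ak_ren; auto|]. split; [apply ak_ren; auto|].
  split; [apply cong_ren; auto|]. split; [|apply cong_ren; auto].
  destruct Hb as [E E' x y ys D z zs HE HE' Hlen Hz Hx Hlets _ _ _].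
  set (Er := {| ec_lets := map (renl f) (ec_lets E); ec_frames := [] |}).
  set (Er' := {| ec_lets := map (renl f) (ec_lets E'); ec_frames := [] |}).
  assert (Eq1 : ren_decl f (plugD E (Let x (Lam y ys D) (plugD E' (Ret (App (Var x) (Var z) (map Var zs)))))) =
    plugD Er (Let (f x) (Lam (f y) (map f ys) (ren_decl f D)) (plugD Er' (Ret (App (Var (f x)) (Var (f z)) (map Var (map f zs))))))).
  { rewrite !plugD_nof; auto. rewrite ren_lets'. simpl. rewrite ren_lets'. simpl. rewrite !map_map. auto. }
  assert (Eq2 : ren_decl f (plugD E (Let x (Lam y ys D) (plugD E' (subst_decl (subst_of (y :: ys) (z :: zs)) D)))) =
    plugD Er (Let (f x) (Lam (f y) (map f ys) (ren_decl f D)) (plugD Er' (subst_decl (subst_of (f y :: map f ys) (f z :: map f zs)) (ren_decl f D))))).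
  { rewrite !plugD_nof; auto. rewrite ren_lets'. simpl. rewrite ren_lets'. rewrite (proj2 subst_ren), subst_of_ren. auto. }
  rewrite Eq1, Eq2. apply base_beta; auto.
  - rewrite !length_map. auto.
  - intros w Hw. change (f z :: map f zs) with (map f (z :: zs)) in Hw. apply in_map_iff in Hw.
    destruct Hw as [u [Eu Hu]]. subst w. rewrite bv_ren, In_map_inj. auto.
  - simpl. rewrite map_map. simpl. rewrite <- map_map. rewrite In_map_inj. auto.
  - intros w Hw. change (Lam (f y) (map f ys) (ren_decl f D)) with (ren_val f (Lam y ys D)). rewrite fvv_ren.
    simpl in Hw. rewrite map_map in Hw. simpl in Hw. rewrite <- map_map in Hw. apply in_map_iff in Hw.
    destruct Hw as [u [Eu Hu]]. subst w. rewrite In_map_inj. apply Hlets. auto.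
  - apply plug_ok_nof; auto.
  - apply plug_ok_nof; auto.
  - apply plug_ok_nof; auto.
Qed.

Lemma ct_red_ak_ren D1 D2 : clos_trans decl red_ak D1 D2 -> clos_trans decl red_ak (ren_decl f D1) (ren_decl f D2).
Proof.
  induction 1.
  - apply t_step. apply red_ak_ren; auto.
  - eapply t_trans; eauto.
Qed.
End Ren.

Lemma ren_id f :
  (forall v, (forall x, In x (allvars_val v) -> f x = x) -> ren_val f v = v) /\ (forall d, (forall x, In x (allvars_decl d) -> f x = x) -> ren_decl f d = d).
Proof.
  apply vd_mutind; intros; simpl; auto.
  - rewrite H0 by (apply av_lam_params; simpl; auto). rewrite map_ext_in with (g := fun x => x).
    + rewrite map_id. rewrite H; auto. intros; apply H0. apply av_lam; auto.
    + intros a Ha. apply H0. apply av_lam_params. simpl; auto.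
  - rewrite (H1 x (av_let_x x v d)).
    rewrite H by (intros; apply H1; apply av_let_v; auto).
    rewrite H0 by (intros; apply H1; apply av_let_d; auto). auto.
  - f_equal. assert (Ht : forall x, In x (tvars m) -> f x = x).
    { intros x Hx; apply H; unfold allvars_decl; simpl; apply in_or_app; auto. }
    clear H. induction m using term_ind'; simpl.
    + rewrite Ht; auto. rewrite tvars_Var. simpl; auto.
    + rewrite tvars_App in Ht. rewrite IHm1, IHm2.
      * f_equal. rewrite map_ext_in with (g := fun x => x); [apply map_id|].
        intros a Ha. rewrite Forall_forall in H. apply H; auto. intros x Hx. apply Ht.
        apply in_or_app; right; apply in_or_app; right. unfold tvars_list. apply in_flat_map. eauto.
      * intros; apply Ht; apply in_or_app; right; apply in_or_app; auto.
      * intros; apply Ht; apply in_or_app; auto.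
Qed.

Definition swap (a b : var) (v : var) : var := if Nat.eqb v a then b else if Nat.eqb v b then a else v.

Lemma swap_inj a b : forall x y, swap a b x = swap a b y -> x = y.
Proof.
  intros x y. unfold swap.
  destruct (Nat.eqb x a) eqn:E1, (Nat.eqb y a) eqn:E2, (Nat.eqb x b) eqn:E3, (Nat.eqb y b) eqn:E4;
    rewrite ?Nat.eqb_eq, ?Nat.eqb_neq in *; intros; subst; auto; try congruence; try lia.
Qed.

Lemma swap_id a b x : x <> a -> x <> b -> swap a b x = x.
Proof. intros. unfold swap. rewrite <- Nat.eqb_neq in H, H0. rewrite H, H0. auto. Qed.

Lemma swap_r a b : swap a b b = a.
Proof. unfold swap. destruct (Nat.eqb b a) eqn:E; [apply Nat.eqb_eq in E; auto|]. rewrite Nat.eqb_refl. auto. Qed.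

Lemma swap_l a b : swap a b a = b.
Proof. unfold swap. rewrite Nat.eqb_refl. auto. Qed.

Lemma assoc_cons a b s v : assoc ((a, b) :: s) v = if Nat.eqb a v then b else assoc s v.
Proof. reflexivity. Qed.

Lemma NoDup_snoc (l : list var) a : NoDup l -> ~ In a l -> NoDup (l ++ [a]).
Proof.
  induction 1; simpl; intros.
  - constructor; auto. constructor.
  - constructor.
    + intro Hc. apply in_app_or in Hc. destruct Hc as [Hc|[Hc|[]]]; [contradiction|subst; apply H1; simpl; auto].
    + apply IHNoDup. intro; apply H1; simpl; auto.
Qed.

Lemma fv_av_cdcl d k C : cdcl d k C -> forall w, In w (fv_decl C) -> w = k \/ In w (allvars_decl d).
Proof. intros H w Hw. destruct (proj2 cvd_fv _ _ _ H w Hw); auto. right. apply fv_in_av. auto. Qed.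

Lemma cong_cps :
  (forall v w, cong_val v w -> forall V W, cval v V -> cval w W -> cong_val V W) /\
  (forall d e, cong_decl d e -> forall k, ~ In k (allvars_decl d) -> ~ In k (allvars_decl e) ->
     forall C1 C2, cdcl d k C1 -> cdcl e k C2 -> cong_decl C1 C2).
Proof.
  apply (cong_mutind (fun v w _ => forall V W, cval v V -> cval w W -> cong_val V W)
    (fun d e _ => forall k, ~ In k (allvars_decl d) -> ~ In k (allvars_decl e) ->
     forall C1 C2, cdcl d k C1 -> cdcl e k C2 -> cong_decl C1 C2)); intros.
  - eapply cval_unique; eauto.
  - apply cv_sym. auto.
  - destruct (cval_exists [] v) as [V' [HV' _]]. eapply cv_trans; [apply H|apply H0]; eauto.
  -
    inversion H0 as [|y1 ys1 d1 k1 C1 Hk1 Hk1' HC1]; subst.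
    inversion H1 as [|y2 ys2 d2 k2 C2 Hk2 Hk2' HC2]; subst.
    set (ks := fresh (y :: ys ++ allvars_decl d ++ allvars_decl d')).
    assert (Hks : forall z, In z (y :: ys ++ allvars_decl d ++ allvars_decl d') -> z <> ks)
      by (intros z Hz E; subst; apply fresh_notin in Hz; auto).
    assert (Kd : ~ In ks (allvars_decl d)) by (intro; apply (Hks ks); auto; right; apply in_or_app; right; apply in_or_app; auto).
    assert (Kd' : ~ In ks (allvars_decl d')) by (intro; apply (Hks ks); auto; right; apply in_or_app; right; apply in_or_app; auto).
    assert (Ky : ~ In ks (y :: ys)) by (intros Hc; apply (Hks ks); auto; destruct Hc; [left; auto|right; apply in_or_app; auto]).
    destruct (cdcl_exists [] d ks Kd) as [Cd [HCd _]].
    destruct (cdcl_exists [] d' ks Kd') as [Cd' [HCd' _]].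
    eapply cv_trans; [apply (cval_unique (Lam y ys d)); [constructor; eauto| apply (rv_lam y ys d ks Cd); auto]|].
    + intro; apply Kd; apply fv_in_av; auto.
    + eapply cv_trans; [apply cv_lam; eapply H; eauto|].
      apply (cval_unique (Lam y ys d')); [apply (rv_lam y ys d' ks Cd'); auto|constructor; auto].
      intro; apply Kd'; apply fv_in_av; auto.
  -
    rename n into Hnd, e into Hlen, n0 into Hfr.
    inversion H as [|y1 ys1 d1 k1 C1 Hk1 Hk1' HC1]; subst.
    set (S0 := y' :: ys').
    set (ks := fresh (y :: ys ++ y' :: ys' ++ allvars_decl d)).
    assert (Hks : forall z, In z (y :: ys ++ y' :: ys' ++ allvars_decl d) -> z <> ks)
      by (intros z Hz E; subst; apply fresh_notin in Hz; auto).
    assert (Kd : ~ In ks (allvars_decl d)) by (intro; apply (Hks ks); auto; right; apply in_or_app; right; right; apply in_or_app; auto).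
    assert (Ky : ~ In ks (y :: ys)) by (intros Hc; apply (Hks ks); auto; destruct Hc; [left; auto|right; apply in_or_app; auto]).
    assert (Ky' : ~ In ks (y' :: ys')) by (intros Hc; apply (Hks ks); auto; right; apply in_or_app; right; destruct Hc; [left; auto|right; apply in_or_app; auto]).
    destruct (cdcl_exists S0 d ks Kd) as [Cs [HCs HBs]].
    set (kk := fresh (allvars_decl Cs ++ y' :: ys' ++ allvars_decl d ++ [ks])).
    assert (Hkk : forall z, In z (allvars_decl Cs ++ y' :: ys' ++ allvars_decl d ++ [ks]) -> z <> kk)
      by (intros z Hz E; subst; apply fresh_notin in Hz; auto).
    assert (KkC : ~ In kk (allvars_decl Cs)) by (intro; apply (Hkk kk); auto; apply in_or_app; auto).
    assert (Kky : ~ In kk (y' :: ys')) by (intros Hc; apply (Hkk kk); auto; apply in_or_app; right; destruct Hc; [left; auto|right; apply in_or_app; auto]).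
    assert (Kkd : ~ In kk (allvars_decl d)) by (intro; apply (Hkk kk); auto; apply in_or_app; right; right; apply in_or_app; right; apply in_or_app; auto).
    assert (Kks : kk <> ks) by (intro E; apply (Hkk ks); auto; apply in_or_app; right; right; apply in_or_app; right; apply in_or_app; right; simpl; auto).
    assert (Hnew : forall u, In u (y' :: ys' ++ [kk]) -> ~ In u (allvars_decl Cs)).
    { intros u Hu. change (y' :: ys' ++ [kk]) with ((y' :: ys') ++ [kk]) in Hu. apply in_app_or in Hu.
      destruct Hu as [Hu|[Hu|[]]]; [|subst; auto].
      intros Hc. unfold allvars_decl in Hc. apply in_app_or in Hc. destruct Hc as [Hc|Hc].
      - destruct (fv_av_cdcl _ _ _ HCs _ Hc) as [E|E].
        + subst. auto.
        + apply (Hfr u Hu). auto.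
      - destruct (HBs _ Hc) as [E|E].
        + apply (Hfr u Hu). apply bv_in_av. auto.
        + apply E. auto. }
    assert (Hnd' : NoDup (y' :: ys' ++ [kk])).
    { change (y' :: ys' ++ [kk]) with ((y' :: ys') ++ [kk]). apply NoDup_snoc; auto. }
    assert (Hlen' : length (ys ++ [ks]) = length (ys' ++ [kk])) by (rewrite !length_app; simpl; lia).
    assert (Hsnoc : subst_of (y :: ys ++ [ks]) (y' :: ys' ++ [kk]) = (ks, kk) :: subst_of (y :: ys) (y' :: ys')).
    { change (y :: ys ++ [ks]) with ((y :: ys) ++ [ks]). change (y' :: ys' ++ [kk]) with ((y' :: ys') ++ [kk]).
      apply subst_of_snoc. simpl. auto. }
    eapply cv_trans; [apply (cval_unique (Lam y ys d)); [exact H| apply (rv_lam y ys d ks Cs); auto]|].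
    { intro; apply Kd; apply fv_in_av; auto. }
    eapply cv_trans; [apply (cv_alpha y (ys ++ [ks]) y' (ys' ++ [kk]) Cs Hnd' Hlen' Hnew)|].
    apply (cval_unique (Lam y' ys' (subst_decl (subst_of (y :: ys) (y' :: ys')) d))); [|exact H0].
    constructor; auto.
    + intros Hc. apply fv_subst in Hc. destruct Hc as [x [Hx Ex]].
      destruct (assoc_subst_of_range (y :: ys) (y' :: ys') x) as [E|E]; [simpl; auto| |].
      * rewrite E in Ex. subst. apply Kkd. apply fv_in_av. auto.
      * rewrite <- Ex in E. auto.
    + assert (Hs : sok (subst_of (y :: ys ++ [ks]) (y' :: ys' ++ [kk])) (bv_decl Cs)).
      { intros b Hb v Hvb. destruct (assoc_subst_of_range (y :: ys ++ [ks]) (y' :: ys' ++ [kk]) v) as [E|E].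
        - simpl. rewrite !length_app. simpl. lia.
        - rewrite E. auto.
        - intro Hc. rewrite Hc in E. apply (Hnew b E). apply bv_in_av. auto. }
      pose proof (proj2 cvd_subst _ _ _ HCs _ Hs) as H'.
      rewrite Hsnoc in H'. rewrite assoc_cons, Nat.eqb_refl in H'.
      rewrite Hsnoc. replace (subst_decl (subst_of (y :: ys) (y' :: ys')) d)
          with (subst_decl ((ks, kk) :: subst_of (y :: ys) (y' :: ys')) d); [exact H'|].
      apply subst_ext. intros x Hx. rewrite assoc_cons.
      destruct (Nat.eqb ks x) eqn:E; auto. apply Nat.eqb_eq in E. subst. exfalso; apply Kd; apply fv_in_av; auto.
  - eapply cdcl_unique; eauto.
  - apply cd_sym. eapply H; eauto.
  -
    rename d into d0, e into e0, f into f0.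
    set (ks := fresh (k :: allvars_decl d0 ++ allvars_decl e0 ++ allvars_decl f0)).
    assert (Hks : forall z, In z (k :: allvars_decl d0 ++ allvars_decl e0 ++ allvars_decl f0) -> z <> ks)
      by (intros z Hz E; subst; apply fresh_notin in Hz; auto).
    assert (K1 : ~ In ks (allvars_decl d0)) by (intro; apply (Hks ks); auto; right; apply in_or_app; auto).
    assert (K2 : ~ In ks (allvars_decl e0)) by (intro; apply (Hks ks); auto; right; apply in_or_app; right; apply in_or_app; auto).
    assert (K3 : ~ In ks (allvars_decl f0)) by (intro; apply (Hks ks); auto; right; apply in_or_app; right; apply in_or_app; auto).
    assert (K4 : k <> ks) by (apply Hks; simpl; auto).
    destruct (cdcl_exists [] d0 ks K1) as [Cd [HCd _]].
    destruct (cdcl_exists [] e0 ks K2) as [Ce [HCe _]].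
    destruct (cdcl_exists [] f0 ks K3) as [Cf [HCf _]].
    assert (Hdf : cong_decl Cd Cf) by (eapply cd_trans; [eapply H|eapply H0]; eauto).
    pose proof (swap_inj ks k) as Hinj.
    assert (Hid : forall d, ~ In k (allvars_decl d) -> ~ In ks (allvars_decl d) -> ren_decl (swap ks k) d = d).
    { intros d Hk Hk'. apply (proj2 (ren_id (swap ks k))). intros x Hx. apply swap_id; intro; subst; auto. }
    pose proof (proj2 (cvd_ren _ Hinj) _ _ _ HCd) as Rd.
    pose proof (proj2 (cvd_ren _ Hinj) _ _ _ HCf) as Rf.
    rewrite swap_l, Hid in Rd by auto. rewrite swap_l, Hid in Rf by auto.
    eapply cd_trans; [eapply cdcl_unique; [exact H3|exact Rd]|].
    eapply cd_trans; [apply (proj2 (cong_ren _ Hinj)); exact Hdf|].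
    eapply cdcl_unique; eauto.
  -
    inversion H2 as [|x1 v1 d1 k1 V1 C1' Hx1 HV1 HC1]; subst.
    inversion H3 as [|x2 v2 d2 k2 V2 C2' Hx2 HV2 HC2]; subst.
    eapply cd_trans; [apply cd_let_v; eapply H; eauto|]. apply cd_let_d. eapply cdcl_unique; eauto.
  -
    inversion H2 as [|x1 v1 d1 k1 V1 C1' Hx1 HV1 HC1]; subst.
    inversion H3 as [|x2 v2 d2 k2 V2 C2' Hx2 HV2 HC2]; subst.
    eapply cd_trans; [apply cd_let_v; eapply cval_unique; eauto|]. apply cd_let_d. eapply H; eauto.
    + intro; apply H0; apply av_let_d; auto.
    + intro; apply H1; apply av_let_d; auto.
  -
    rename n into Hx'.
    inversion H1 as [|x1 v1 d1 k1 V1 C1' Hx1 HV1 HC1]; subst.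
    inversion H2 as [|x2 v2 d2 k2 V2 C2' Hx2 HV2 HC2]; subst.
    assert (Kd : ~ In k (allvars_decl d)) by (intro; apply H; apply av_let_d; auto).
    assert (Kx' : x' <> k) by (intro E; subst; apply H0; apply av_let_x).
    destruct (cdcl_exists [x'] d k Kd) as [Cs [HCs HBs]].
    assert (Hx'C : ~ In x' (allvars_decl Cs)).
    { intros Hc. unfold allvars_decl in Hc. apply in_app_or in Hc. destruct Hc as [Hc|Hc].
      - destruct (fv_av_cdcl _ _ _ HCs _ Hc) as [E|E]; auto.
      - destruct (HBs _ Hc) as [E|E]; [apply Hx'; apply bv_in_av; auto| apply E; simpl; auto]. }
    eapply cd_trans; [apply cd_let_d; eapply cdcl_unique; eauto|].
    eapply cd_trans; [apply (cd_alpha x x' V1 Cs Hx'C)|].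
    eapply cd_trans; [apply cd_let_v; eapply cval_unique; eauto|].
    apply cd_let_d. eapply cdcl_unique; [|exact HC2].
    pose proof (proj2 cvd_subst _ _ _ HCs [(x, x')]) as H'.
    rewrite assoc1 in H'. destruct (Nat.eqb x k) eqn:E; [apply Nat.eqb_eq in E; subst; contradiction|].
    apply H'. apply sok1. intro; apply Hx'C; apply bv_in_av; auto.
  -
    rename n into Hne, n0 into H12, n1 into H21.
    inversion H1 as [|x1' v1' d1 k1 V1 C1' Hx1 HV1 HC1]; subst.
    inversion HC1 as [|x2' v2' d2 k2 V2 C2' Hx2 HV2 HC2]; subst.
    inversion H2 as [|x3 v3 d3 k3 V3 C3 Hx3 HV3 HC3]; subst.
    inversion HC3 as [|x4 v4 d4 k4 V4 C4 Hx4 HV4 HC4]; subst.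
    eapply cd_trans; [apply cd_swap; auto|].
    + intro Hc; apply H12; exact (proj1 cvd_fv _ _ HV2 _ Hc).
    + intro Hc; apply H21; exact (proj1 cvd_fv _ _ HV1 _ Hc).
    + eapply cd_trans; [apply cd_let_v; eapply cval_unique; eauto|]. apply cd_let_d.
      eapply cd_trans; [apply cd_let_v; eapply cval_unique; eauto|]. apply cd_let_d.
      eapply cdcl_unique; eauto.
  -
    rename n into Hx.
    inversion H1 as [|x1 v1 d1 k1 V1 C1' Hx1 HV1 HC1]; subst.
    eapply cd_trans; [apply cd_gc|].
    + intro Hc. destruct (proj2 cvd_fv _ _ _ HC1 _ Hc); auto.
    + eapply cdcl_unique; eauto.
Qed.

Definition finst (f : frame) (y k : var) (B : decl) : Prop :=
  match f with
  | FHead m1 ms => capp [y] (m1 :: ms) k B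
  | FArg x xs ms => capp (x :: xs ++ [y]) ms k B
  end.

Inductive fstack : list frame -> var -> list (var * val) -> var -> Prop :=
| fs_nil : forall k, fstack [] k [] k
| fs_cons : forall f Fs k k' y B L kn,
    ~ In y (k :: fv_frame f) -> k' <> k -> ~ In k' (flat_map fv_frame Fs) ->
    finst f y k B -> fstack Fs k' L kn -> fstack (f :: Fs) k ((k', Lam y [] B) :: L) kn.

Lemma tvars_mkApp m args : tvars (mkApp m args) = tvars m ++ tvars_list args.
Proof. destruct args; simpl. - rewrite app_nil_r. auto. - rewrite tvars_App, tvars_list_cons. auto. Qed.

Lemma tv_pf f X w : In w (tvars (plug_frame f X)) <-> In w (tvars X) \/ In w (fv_frame f).
Proof.
  destruct f as [m1 ms|x xs ms]; simpl.
  - rewrite tvars_App. rewrite !in_app_iff. tauto.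
  - rewrite tvars_mkApp, tvars_Var. autorewrite with tv. simpl. rewrite !in_app_iff. simpl. tauto.
Qed.

Lemma tv_PF Fs h w : In w (tvars (plug_frames Fs h)) <-> In w (tvars h) \/ In w (flat_map fv_frame Fs).
Proof.
  induction Fs as [|f Fs IH]; simpl.
  - tauto.
  - change (plug_frames (f :: Fs) h) with (plug_frame f (plug_frames Fs h)). rewrite tv_pf, IH, in_app_iff. tauto.
Qed.

Lemma plug_frame_App f X : exists a a1 as', plug_frame f X = App a a1 as'.
Proof.
  destruct f as [m1 ms|x xs ms]; simpl; eauto.
  destruct xs; simpl; eauto.
Qed.

Lemma cterm_mkApp m l k C : l <> [] -> capp [] (m :: l) k C -> cterm (mkApp m l) k C.
Proof. destruct l; [congruence|]. intros _ H. simpl. constructor. auto. Qed.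

Lemma ca_vars vs : forall acc rest k C, capp (acc ++ vs) rest k C -> capp acc (map Var vs ++ rest) k C.
Proof.
  induction vs as [|v vs IH]; intros acc rest k C H; simpl.
  - rewrite app_nil_r in H. auto.
  - constructor. apply IH. rewrite <- app_assoc. auto.
Qed.

Lemma frame_step f y k B k' X CX : finst f y k B -> ~ In y (k :: fv_frame f) -> ~ In k' (tvars X) ->
  (exists a a1 as', X = App a a1 as') -> cterm X k' CX -> cterm (plug_frame f X) k (Let k' (Lam y [] B) CX).
Proof.
  intros HB Hy Hk [a [a1 [as' EX]]] HX. subst X. inversion HX; subst.
  destruct f as [m1 ms|x xs ms]; simpl in *.
  - constructor. apply ca_app; auto.
  - apply cterm_mkApp; [destruct xs; simpl; congruence|].
    change (Var x :: map Var xs ++ App a a1 as' :: ms) with (map Var (x :: xs) ++ App a a1 as' :: ms).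
    apply (ca_vars (x :: xs) []). simpl. apply ca_app; auto.
Qed.

Lemma frame_var f y k B v : finst f y k B -> ~ In y (k :: fv_frame f) -> ~ In v (bv_decl B) ->
  cterm (plug_frame f (Var v)) k (subst_decl [(y, v)] B).
Proof.
  intros HB Hy Hv. destruct f as [m1 ms|x xs ms]; simpl in *.
  - constructor. constructor. apply (capp_ren_acc [] y); auto.
  - apply cterm_mkApp; [destruct xs; simpl; congruence|].
    replace (Var x :: map Var xs ++ Var v :: ms) with (map Var (x :: xs ++ [v]) ++ ms)
      by (simpl; rewrite map_app, <- app_assoc; auto).
    apply (ca_vars (x :: xs ++ [v]) []). simpl.
    change (x :: xs ++ [v]) with ((x :: xs) ++ [v]). apply capp_ren_acc; auto.
Qed.

Lemma F1 Fs k L kn : fstack Fs k L kn -> forall h Ch, (Fs <> [] -> exists a a1 as', h = App a a1 as') ->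
  (forall p, In p L -> ~ In (fst p) (tvars h)) -> cterm h kn Ch ->
  cterm (plug_frames Fs h) k (lets' L Ch).
Proof.
  induction 1; intros h Ch Happ HL Hh; simpl; auto.
  change (plug_frame f (plug_frames Fs h)) with (plug_frame f (plug_frames Fs h)).
  apply frame_step; auto.
  - rewrite tv_PF. intros [Hc|Hc]; [apply (HL (k', Lam y [] B)); simpl; auto|auto].
  - destruct Fs as [|f' Fs'].
    + simpl. apply Happ. congruence.
    + simpl. apply plug_frame_App.
  - apply IHfstack; auto.
    + intros _. apply Happ. congruence.
    + intros p Hp. apply HL. simpl. auto.
Qed.

Lemma fstack_snoc Fs k L kn : fstack Fs k L kn -> Fs <> [] ->
  exists Fs0 f L0 k0 y B, Fs = Fs0 ++ [f] /\ L = L0 ++ [(kn, Lam y [] B)] /\ fstack Fs0 k L0 k0 /\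
    finst f y k0 B /\ ~ In y (k0 :: fv_frame f) /\ kn <> k0.
Proof.
  induction 1; [congruence|]. intros _.
  destruct Fs as [|f' Fs'].
  - inversion H3; subst. exists [], f, [], k, y, B. repeat split; auto. constructor.
  - destruct IHfstack as (Fs0 & f0 & L0 & k0 & y0 & B0 & E1 & E2 & HF & HB & Hy & Hk); [congruence|].
    exists (f :: Fs0), f0, ((k', Lam y [] B) :: L0), k0, y0, B0.
    rewrite E1, E2. repeat split; auto. constructor; auto.
    rewrite E1 in H1. rewrite flat_map_app in H1. intro; apply H1; apply in_or_app; auto.
Qed.

Lemma finst_exists Sv f y k : exists B, finst f y k B /\ (forall b, In b (bv_decl B) -> ~ In b Sv).
Proof.
  destruct f as [m1 ms|x xs ms]; simpl; apply capp_exists'.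
  - left; congruence.
  - left; congruence.
Qed.

Lemma fstack_exists Sv Fs : forall k, exists L kn, fstack Fs k L kn /\
  (forall p, In p L -> ~ In (fst p) Sv /\ forall b, In b (bv_val (snd p)) -> ~ In b Sv).
Proof.
  induction Fs as [|f Fs IH]; intros k.
  - exists [], k. split; [constructor|]. intros p [].
  - set (y := fresh (Sv ++ k :: fv_frame f)).
    set (k' := fresh (Sv ++ k :: flat_map fv_frame Fs)).
    destruct (finst_exists Sv f y k) as [B [HB HBs]].
    destruct (IH k') as [L [kn [HL HLs]]].
    assert (Hy : forall z, In z (Sv ++ k :: fv_frame f) -> z <> y) by (intros z Hz E; subst; apply fresh_notin in Hz; auto).
    assert (Hk : forall z, In z (Sv ++ k :: flat_map fv_frame Fs) -> z <> k') by (intros z Hz E; subst; apply fresh_notin in Hz; auto).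
    exists ((k', Lam y [] B) :: L), kn. split.
    + constructor; auto.
      * intro Hc. apply (Hy y); auto. apply in_or_app. auto.
      * intro E. apply (Hk k); auto. apply in_or_app. simpl. auto.
      * intro Hc. apply (Hk k'); auto. apply in_or_app. simpl. auto.
    + intros p [Hp|Hp]; [|auto]. subst p. simpl. split.
      * intro Hc. apply (Hk k'); auto. apply in_or_app. auto.
      * intros b [Hb|Hb]; [subst b; intro Hc; apply (Hy y); auto; apply in_or_app; auto|].
        auto.
Qed.

Lemma finst_fv f y k B : finst f y k B -> forall w, In w (fv_decl B) -> w = k \/ w = y \/ In w (fv_frame f).
Proof.
  intros H w Hw. destruct f as [m1 ms|x xs ms]; simpl in H.
  - apply (capp_fv _ _ _ _ H) in Hw. simpl in Hw |- *. rewrite tvars_list_cons in Hw. intuition.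
  - apply (capp_fv _ _ _ _ H) in Hw. simpl in Hw |- *. rewrite !in_app_iff in Hw. simpl in Hw. intuition.
Qed.

Lemma fstack_fv Fs k L kn : fstack Fs k L kn -> forall p, In p L -> forall w, In w (fv_val (snd p)) ->
  w = k \/ In w (map fst L) \/ In w (flat_map fv_frame Fs).
Proof.
  induction 1; intros p Hp w Hw; [destruct Hp|].
  destruct Hp as [Hp|Hp].
  - subst p. simpl in Hw. apply In_remove_all in Hw. destruct Hw as [Hw Hn].
    destruct (finst_fv _ _ _ _ H2 w Hw) as [E|[E|E]]; auto.
    + subst. exfalso. apply Hn. simpl. auto.
    + right. right. simpl. apply in_or_app. auto.
  - destruct (IHfstack p Hp w Hw) as [E|[E|E]].
    + subst. right. left. simpl. auto.
    + right. left. simpl. auto.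
    + right. right. simpl. apply in_or_app. auto.
Qed.

Lemma fstack_ak Fs k L kn : fstack Fs k L kn -> forall p, In p L -> ak_val (snd p).
Proof.
  induction 1; intros p Hp; [destruct Hp|]. destruct Hp as [Hp|Hp]; auto.
  subst. simpl. destruct f; simpl in H2; eapply capp_ak; eauto.
Qed.

Lemma fstack_names Fs k L kn : fstack Fs k L kn -> Fs <> [] -> In kn (map fst L).
Proof.
  induction 1; [congruence|]. intros _. destruct Fs.
  - inversion H3; subst. simpl. auto.
  - simpl. right. apply IHfstack. congruence.
Qed.

Lemma lets'_cong L C C' : cong_decl C C' -> cong_decl (lets' L C) (lets' L C').
Proof. induction L; simpl; auto. intros. apply cd_let_d. auto. Qed.

Lemma move1 x v B C : (forall q, In q B -> x <> fst q /\ ~ In x (fv_val (snd q)) /\ ~ In (fst q) (fv_val v)) ->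
  cong_decl (Let x v (lets' B C)) (lets' B (Let x v C)).
Proof.
  induction B as [|q B IH]; simpl; intros H; [apply cd_refl|].
  destruct (H q (or_introl eq_refl)) as [H1 [H2 H3]].
  eapply cd_trans; [apply cd_swap; auto|]. apply cd_let_d. apply IH. auto.
Qed.

Lemma lets'_swap A B C : (forall p q, In p A -> In q B -> fst p <> fst q /\ ~ In (fst p) (fv_val (snd q)) /\ ~ In (fst q) (fv_val (snd p))) ->
  cong_decl (lets' (A ++ B) C) (lets' (B ++ A) C).
Proof.
  induction A as [|p A IH]; intros H; simpl.
  - rewrite app_nil_r. apply cd_refl.
  - eapply cd_trans; [apply cd_let_d; apply IH; intros; apply H; simpl; auto|].
    rewrite lets'_app. rewrite lets'_app. simpl.
    apply move1. intros q Hq. apply H; simpl; auto.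
Qed.

Definition lrel (k : var) (p q : var * val) : Prop := fst q = fst p /\ fst p <> k /\ cval (snd p) (snd q).

Lemma cdcl_lets' k ls ls' d C : Forall2 (lrel k) ls ls' -> cdcl d k C -> cdcl (lets' ls d) k (lets' ls' C).
Proof.
  induction 1; simpl; auto. intros Hd. destruct x as [x v], y as [y V]. destruct H as [E [Hx HV]]. simpl in *. subst.
  constructor; auto.
Qed.

Lemma cdcl_lets'_inv k ls : forall d C, cdcl (lets' ls d) k C -> exists ls' C', C = lets' ls' C' /\ Forall2 (lrel k) ls ls' /\ cdcl d k C'.
Proof.
  induction ls as [|[x v] ls IH]; simpl; intros d C H.
  - exists [], C. split; auto.
  - inversion H; subst. destruct (IH _ _ H7) as [ls' [C' [E [HF HC]]]]. subst.
    exists ((x, V) :: ls'), C'. split; auto. split; auto. constructor; auto. split; simpl; auto.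
Qed.

Lemma lrel_exists k ls : (forall p, In p ls -> fst p <> k) -> exists ls', Forall2 (lrel k) ls ls'.
Proof.
  induction ls as [|[x v] ls IH]; intros H.
  - exists []. constructor.
  - destruct IH as [ls' H']; [intros; apply H; simpl; auto|].
    destruct (cval_exists [] v) as [V [HV _]]. exists ((x, V) :: ls'). constructor; auto.
    split; [reflexivity|split; [apply (H (x, v)); simpl; auto| exact HV]].
Qed.

Lemma lrel_names k ls ls' : Forall2 (lrel k) ls ls' -> map fst ls' = map fst ls.
Proof. induction 1; simpl; auto. destruct H as [E _]. rewrite E, IHForall2. auto. Qed.

Lemma lrel_in k ls ls' : Forall2 (lrel k) ls ls' -> forall q, In q ls' -> exists p, In p ls /\ lrel k p q.
Proof.
  induction 1; intros q Hq; [destruct Hq|]. destruct Hq as [Hq|Hq].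
  - subst. exists x. simpl. auto.
  - destruct (IHForall2 q Hq) as [p [Hp Hr]]. exists p. simpl. auto.
Qed.

Lemma ak_lets' L C : (forall p, In p L -> ak_val (snd p)) -> ak_decl C -> ak_decl (lets' L C).
Proof. induction L; simpl; intros; auto. Qed.

Lemma lrel_ak k ls ls' : Forall2 (lrel k) ls ls' -> forall q, In q ls' -> ak_val (snd q).
Proof. intros H q Hq. destruct (lrel_in _ _ _ H q Hq) as [p [_ [_ [_ Hc]]]]. eapply (proj1 cvd_ak); eauto. Qed.

Lemma av_lets'_d ls d w : In w (allvars_decl d) -> In w (allvars_decl (lets' ls d)).
Proof. induction ls; simpl; auto. intros. apply av_let_d. auto. Qed.

Lemma av_lets'_p ls d p : In p ls -> In (fst p) (allvars_decl (lets' ls d)) /\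
   (forall w, In w (allvars_val (snd p)) -> In w (allvars_decl (lets' ls d))).
Proof.
  induction ls as [|q ls IH]; simpl; intros Hp; [destruct Hp|]. destruct Hp as [Hp|Hp].
  - subst. split; [apply av_let_x|]. intros; apply av_let_v; auto.
  - destruct (IH Hp) as [H1 H2]. split; [apply av_let_d; auto|]. intros; apply av_let_d; auto.
Qed.

Lemma bv_lets'_p ls d p : In p ls -> In (fst p) (bv_decl (lets' ls d)).
Proof.
  induction ls as [|q ls IH]; simpl; intros Hp; [destruct Hp|]. destruct Hp as [Hp|Hp].
  - subst. simpl. auto.
  - simpl. right. apply in_or_app. auto.
Qed.

Lemma av_ret m w : In w (tvars m) -> In w (allvars_decl (Ret m)).
Proof. unfold allvars_decl. simpl. rewrite app_nil_r. auto. Qed.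

Lemma split_let x v d : split_decl (Let x v d) = ((x, v) :: fst (split_decl d), snd (split_decl d)).
Proof. simpl. destruct (split_decl d); reflexivity. Qed.

Lemma split_plugD E d : split_decl (plugD E d) = (ec_lets E ++ fst (split_decl d), plug_frames (ec_frames E) (snd (split_decl d))).
Proof. rewrite plugD_eq, split_lets'. simpl. rewrite app_nil_r. reflexivity. Qed.

Lemma PF_app a b h : plug_frames (a ++ b) h = plug_frames a (plug_frames b h).
Proof. unfold plug_frames. apply fold_right_app. Qed.

Lemma shape E E' x v d : plugD E (Let x v (plugD E' d)) =
  lets' (ec_lets E ++ (x, v) :: ec_lets E' ++ fst (split_decl d)) (Ret (plug_frames (ec_frames E ++ ec_frames E') (snd (split_decl d)))).
Proof. rewrite plugD_eq, split_let, split_plugD. simpl. rewrite PF_app. reflexivity. Qed.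

Lemma lrel_mono kn k ls ls' : Forall2 (lrel kn) ls ls' -> (forall p, In p ls -> fst p <> k) -> Forall2 (lrel k) ls ls'.
Proof.
  induction 1; intros H'; constructor.
  - destruct H as [E1 [E2 E3]]. split; auto. split; auto. apply H'. simpl; auto.
  - apply IHForall2. intros; apply H'; simpl; auto.
Qed.

Lemma fv_in_avv v w : In w (fv_val v) -> In w (allvars_val v).
Proof. unfold allvars_val. intros; apply in_or_app; auto. Qed.

Lemma bv_in_avv v w : In w (bv_val v) -> In w (allvars_val v).
Proof. unfold allvars_val. intros; apply in_or_app; auto. Qed.

Lemma red_ak_intro X Y B A : ak_decl X -> ak_decl Y -> ak_decl B -> ak_decl A ->
  cong_decl X B -> base (fun E => ec_frames E = []) B A -> cong_decl A Y -> red_ak X Y.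
Proof. intros. split; auto. split; auto. exists B, A. auto. Qed.

Lemma step_sim D1 D2 k : base (fun _ => True) D1 D2 -> ~ In k (allvars_decl D1) -> ~ In k (allvars_decl D2) ->
  forall C1 C2, cdcl D1 k C1 -> cdcl D2 k C2 -> clos_trans decl red_ak C1 C2.
Proof.
  intros Hb HkD1 HkD2 C1 C2 HC1 HC2.
  destruct Hb as [E E' x y ys D z zs _ _ Hlen Hz Hx Hlets Hok2 _ Hok3].
  set (Fs := ec_frames E ++ ec_frames E').
  set (sg := subst_of (y :: ys) (z :: zs)).
  set (Dl := fst (split_decl (subst_decl sg D))).
  set (M := snd (split_decl (subst_decl sg D))).
  set (LD1 := ec_lets E ++ (x, Lam y ys D) :: ec_lets E').
  assert (Sh1 : plugD E (Let x (Lam y ys D) (plugD E' (Ret (App (Var x) (Var z) (map Var zs))))) =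
     lets' LD1 (Ret (plug_frames Fs (App (Var x) (Var z) (map Var zs))))).
  { rewrite shape. simpl. rewrite app_nil_r. reflexivity. }
  assert (Sh2 : plugD E (Let x (Lam y ys D) (plugD E' (subst_decl sg D))) = lets' (LD1 ++ Dl) (Ret (plug_frames Fs M))).
  { rewrite shape. unfold LD1. rewrite <- app_assoc. reflexivity. }
  assert (Hok3' : forall w, In w (map fst Dl) -> ~ In w (flat_map fv_frame Fs)).
  { intros w Hw Hc. unfold Fs in Hc. rewrite flat_map_app in Hc. apply in_app_or in Hc. destruct Hc as [Hc|Hc].
    - apply (Hok3 w); auto. rewrite split_let, split_plugD. simpl. right. rewrite map_app. apply in_or_app. auto.
    - apply (Hok2 w); auto. }
  clear Hok2 Hok3.
  fold sg in HC2, HkD2. rewrite Sh1 in HC1, HkD1. rewrite Sh2 in HC2, HkD2.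
  set (D1' := lets' LD1 (Ret (plug_frames Fs (App (Var x) (Var z) (map Var zs))))) in *.
  set (D2' := lets' (LD1 ++ Dl) (Ret (plug_frames Fs M))) in *.
  set (Sv := k :: allvars_decl D1' ++ allvars_decl D2').
  assert (In1 : forall w, In w (allvars_decl D1') -> In w Sv) by (intros; simpl; right; apply in_or_app; auto).
  assert (In2 : forall w, In w (allvars_decl D2') -> In w Sv) by (intros; simpl; right; apply in_or_app; auto).
  assert (InR : forall w, In w (tvars (plug_frames Fs (App (Var x) (Var z) (map Var zs)))) -> In w Sv)
    by (intros; apply In1; apply av_lets'_d; apply av_ret; auto).
  assert (InM : forall w, In w (tvars (plug_frames Fs M)) -> In w Sv)
    by (intros; apply In2; apply av_lets'_d; apply av_ret; auto).
  assert (InFr : forall w, In w (flat_map fv_frame Fs) -> In w Sv) by (intros; apply InR; apply tv_PF; auto).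
  assert (Inr : forall w, In w (tvars (App (Var x) (Var z) (map Var zs))) -> In w Sv) by (intros; apply InR; apply tv_PF; auto).
  assert (InMM : forall w, In w (tvars M) -> In w Sv) by (intros; apply InM; apply tv_PF; auto).
  assert (InLD1 : forall p, In p LD1 -> In (fst p) Sv /\ forall w, In w (allvars_val (snd p)) -> In w Sv).
  { intros p Hp. destruct (av_lets'_p LD1 (Ret (plug_frames Fs (App (Var x) (Var z) (map Var zs)))) p Hp) as [H1 H2].
    split; [apply In1; auto| intros; apply In1; auto]. }
  assert (InLam : forall w, In w (allvars_val (Lam y ys D)) -> In w Sv).
  { apply (InLD1 (x, Lam y ys D)). unfold LD1. apply in_or_app. simpl. auto. }
  assert (InD : forall w, In w (allvars_decl D) -> In w Sv) by (intros; apply InLam; apply av_lam; auto).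
  assert (InDl : forall p, In p Dl -> In (fst p) (bv_decl D2') /\ In (fst p) Sv /\ forall w, In w (allvars_val (snd p)) -> In w Sv).
  { intros p Hp. assert (Hp' : In p (LD1 ++ Dl)) by (apply in_or_app; auto).
    destruct (av_lets'_p (LD1 ++ Dl) (Ret (plug_frames Fs M)) p Hp') as [H1 H2].
    split; [apply bv_lets'_p; auto|]. split; [apply In2; auto| intros; apply In2; auto]. }
  assert (HkLD1 : forall p, In p LD1 -> fst p <> k).
  { intros p Hp E0. apply HkD1. rewrite <- E0. exact (proj1 (av_lets'_p LD1 _ p Hp)). }
  assert (HkDl : forall p, In p Dl -> fst p <> k).
  { intros p Hp E0. apply HkD2. rewrite <- E0. apply bv_in_av. apply InDl. auto. }
  destruct (fstack_exists Sv Fs k) as [L [kn [HL HLs]]].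
  assert (Hkn : In kn Sv \/ In kn (map fst L)).
  { destruct Fs as [|f0 Fs0] eqn:EF.
    - inversion HL; subst. left. simpl. auto.
    - right. apply (fstack_names _ _ _ _ HL). congruence. }
  assert (HknD : ~ In kn (bv_decl D)).
  { intro Hc. assert (In kn Sv) by (apply InD; apply bv_in_av; auto).
    destruct Fs as [|f0 Fs0] eqn:EF.
    - inversion HL; subst. apply HkD1. apply (av_lets'_p LD1 _ (x, Lam y ys D)).
      + unfold LD1. apply in_or_app. simpl. auto.
      + apply av_lam. apply bv_in_av. auto.
    - pose proof (fstack_names _ _ _ _ HL) as Hn. rewrite <- EF in Hn. assert (In kn (map fst L)) by (apply Hn; congruence).
      apply in_map_iff in H0. destruct H0 as [p [Ep Hp]]. apply (proj1 (HLs p Hp)). rewrite Ep. auto. }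
  set (Sv' := Sv ++ map fst L).
  set (k0 := fresh (Sv' ++ y :: ys)).
  assert (Hk0 : forall w, In w (Sv' ++ y :: ys) -> w <> k0) by (intros w Hw E0; subst; apply fresh_notin in Hw; auto).
  assert (Hk0D : ~ In k0 (allvars_decl D)) by (intro Hc; apply (Hk0 k0); auto; apply in_or_app; left; apply in_or_app; left; apply InD; auto).
  assert (Hk0y : ~ In k0 (y :: ys)) by (intro Hc; apply (Hk0 k0); auto; apply in_or_app; right; auto).
  destruct (cdcl_exists Sv' D k0 Hk0D) as [B [HB HBb]].
  set (lam' := Lam y (ys ++ [k0]) B).
  assert (Hlam : cval (Lam y ys D) lam') by (apply rv_lam; auto; intro; apply Hk0D; apply fv_in_av; auto).
  destruct (lrel_exists k (ec_lets E)) as [LE HLE].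
  { intros p Hp. apply HkLD1. unfold LD1. apply in_or_app. auto. }
  destruct (lrel_exists k (ec_lets E')) as [LE2 HLE2].
  { intros p Hp. apply HkLD1. unfold LD1. apply in_or_app. simpl. auto. }
  set (LD1' := LE ++ (x, lam') :: LE2).
  assert (HLD1 : Forall2 (lrel k) LD1 LD1').
  { unfold LD1, LD1'. apply Forall2_app; auto. constructor; auto. split; auto. split; auto.
    apply HkLD1. unfold LD1. apply in_or_app. simpl. auto. }
  set (Cr := Ret (App (Var x) (Var z) (map Var (zs ++ [kn])))).
  assert (HCr : cterm (App (Var x) (Var z) (map Var zs)) kn Cr).
  { constructor. apply (ca_vars [x; z] [] (map Var zs) kn Cr). simpl.
    pose proof (ca_vars zs [x; z] [] kn Cr) as Hv. rewrite app_nil_r in Hv. apply Hv.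
    exact (ca_nil x (z :: zs) kn). }
  assert (HLnames : forall p, In p L -> ~ In (fst p) Sv) by (intros p Hp; apply HLs; auto).
  assert (HI1 : cdcl D1' k (lets' LD1' (lets' L Cr))).
  { apply cdcl_lets'; auto. constructor. apply (F1 _ _ _ _ HL); auto.
    - intros _. eauto.
    - intros p Hp Hc. apply (HLnames p Hp). apply Inr. auto. }
  set (Eak := {| ec_lets := LE; ec_frames := [] |}).
  set (E2ak := {| ec_lets := LE2 ++ L; ec_frames := [] |}).
  set (sg' := subst_of (y :: ys ++ [k0]) (z :: zs ++ [kn])).
  assert (Hsg' : sg' = (k0, kn) :: sg).
  { unfold sg', sg. change (y :: ys ++ [k0]) with ((y :: ys) ++ [k0]). change (z :: zs ++ [kn]) with ((z :: zs) ++ [kn]).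
    apply subst_of_snoc. simpl. auto. }
  assert (Bef : plugD Eak (Let x lam' (plugD E2ak (Ret (App (Var x) (Var z) (map Var (zs ++ [kn])))))) = lets' LD1' (lets' L Cr)).
  { rewrite !plugD_nof by reflexivity. unfold LD1'. rewrite lets'_app. simpl. rewrite lets'_app. reflexivity. }
  set (Aft := plugD Eak (Let x lam' (plugD E2ak (subst_decl sg' B)))).
  assert (HBz : forall w, In w (z :: zs ++ [kn]) -> ~ In w (bv_decl B)).
  { intros w Hw Hc. destruct (HBb w Hc) as [Hd|Hd].
    - change (z :: zs ++ [kn]) with ((z :: zs) ++ [kn]) in Hw. apply in_app_or in Hw. destruct Hw as [Hw|[Hw|[]]].
      + apply (Hz w); auto.
      + subst. auto.
    - apply Hd. change (z :: zs ++ [kn]) with ((z :: zs) ++ [kn]) in Hw. apply in_app_or in Hw. destruct Hw as [Hw|[Hw|[]]].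
      + apply in_or_app. left. apply Inr. autorewrite with tv. simpl. right. destruct Hw; [left; auto|right; auto].
      + subst. apply in_or_app. destruct Hkn; auto. }
  assert (Hbase1 : base (fun E => ec_frames E = []) (lets' LD1' (lets' L Cr)) Aft).
  { rewrite <- Bef. unfold Aft, lam'. apply base_beta; auto.
    - rewrite !length_app. simpl. lia.
    - simpl. rewrite map_app, (lrel_names _ _ _ HLE2). intro Hc. apply in_app_or in Hc. destruct Hc as [Hc|Hc]; [apply Hx; auto|].
      apply in_map_iff in Hc. destruct Hc as [p [Ep Hp]]. apply (HLnames p Hp). rewrite Ep.
      refine (proj1 (InLD1 (x, Lam y ys D) _)). unfold LD1; apply in_or_app; simpl; auto.
    - simpl. intros w Hw Hc. apply (proj1 cvd_fv _ _ Hlam) in Hc. rewrite map_app, (lrel_names _ _ _ HLE2) in Hw.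
      apply in_app_or in Hw. destruct Hw as [Hw|Hw]; [apply (Hlets w); auto|].
      apply in_map_iff in Hw. destruct Hw as [p [Ep Hp]]. apply (HLnames p Hp). rewrite Ep. apply InLam. apply fv_in_avv. auto.
    - apply plug_ok_nof; reflexivity.
    - apply plug_ok_nof; reflexivity.
    - apply plug_ok_nof; reflexivity. }
  assert (HsB : cdcl (subst_decl sg D) kn (subst_decl sg' B)).
  { assert (Hs : sok sg' (bv_decl B)).
    { intros b Hb v Hvb. destruct (assoc_subst_of_range (y :: ys ++ [k0]) (z :: zs ++ [kn]) v) as [E0|E0].
      - simpl. rewrite !length_app. simpl. lia.
      - fold sg' in E0. rewrite E0. auto.
      - fold sg' in E0. intro Hc. rewrite Hc in E0. apply (HBz b E0). auto. }
    pose proof (proj2 cvd_subst _ _ _ HB _ Hs) as H'.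
    rewrite Hsg' in H'. rewrite assoc_cons, Nat.eqb_refl in H'.
    rewrite Hsg'. replace (subst_decl sg D) with (subst_decl ((k0, kn) :: sg) D); [exact H'|].
    apply subst_ext. intros w Hw. rewrite assoc_cons. destruct (Nat.eqb k0 w) eqn:E0; auto.
    apply Nat.eqb_eq in E0. subst. exfalso. apply Hk0D. apply fv_in_av. auto. }
  assert (Edec : subst_decl sg D = lets' Dl (Ret M)) by apply split_inv.
  rewrite Edec in HsB.
  destruct (cdcl_lets'_inv _ _ _ _ HsB) as [Dl' [CM [ECM [HDl HCM]]]].
  assert (HCMt : cterm M kn CM) by (inversion HCM; auto).
  assert (EAft : Aft = lets' LD1' (lets' L (lets' Dl' CM))).
  { unfold Aft. rewrite !plugD_nof by reflexivity. rewrite ECM. unfold LD1'. rewrite lets'_app. simpl. rewrite lets'_app. reflexivity. }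
  assert (Hsw : cong_decl (lets' L (lets' Dl' CM)) (lets' Dl' (lets' L CM))).
  { rewrite <- !lets'_app. apply lets'_swap. intros p q Hp Hq.
    destruct (lrel_in _ _ _ HDl q Hq) as [p0 [Hp0 [Eq [_ Hv]]]].
    destruct (InDl p0 Hp0) as [Hb0 [Hs0 Ha0]].
    split; [|split].
    - intro E0. apply (HLnames p Hp). rewrite E0, Eq. auto.
    - intro Hc. apply (HLnames p Hp). apply Ha0. apply fv_in_avv. exact (proj1 cvd_fv _ _ Hv _ Hc).
    - intro Hc. rewrite Eq in Hc. destruct (fstack_fv _ _ _ _ HL p Hp _ Hc) as [E0|[E0|E0]].
      + apply (HkDl p0 Hp0). auto.
      + apply in_map_iff in E0. destruct E0 as [p1 [Ep1 Hp1]]. apply (HLnames p1 Hp1). rewrite Ep1. auto.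
      + apply (Hok3' (fst p0)); auto. apply in_map. auto. }
  assert (HakLD1' : forall p, In p LD1' -> ak_val (snd p)) by (apply (lrel_ak _ _ _ HLD1)).
  assert (HakL : forall p, In p L -> ak_val (snd p)) by (apply (fstack_ak _ _ _ _ HL)).
  assert (HakDl' : forall p, In p Dl' -> ak_val (snd p)) by (apply (lrel_ak _ _ _ HDl)).
  assert (HakCM : ak_decl CM) by (apply (proj2 cvd_ak _ _ _ HCM)).
  assert (HakC1 : ak_decl C1) by (apply (proj2 cvd_ak _ _ _ HC1)).
  assert (HakC2 : ak_decl C2) by (apply (proj2 cvd_ak _ _ _ HC2)).
  assert (HakI1 : ak_decl (lets' LD1' (lets' L Cr))) by (apply (proj2 cvd_ak _ _ _ HI1)).
  assert (HakAft : ak_decl Aft) by (rewrite EAft; apply ak_lets'; auto; apply ak_lets'; auto; apply ak_lets'; auto).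
  assert (Hcong1 : cong_decl C1 (lets' LD1' (lets' L Cr))) by (eapply cdcl_unique; eauto).
  assert (Hcase : (Fs = [] \/ exists a a1 as', M = App a a1 as') \/ (Fs <> [] /\ exists v, M = Var v)).
  { assert (HMd : (exists v, M = Var v) \/ (exists a a1 as', M = App a a1 as'))
      by (destruct M; eauto).
    assert (HFd : Fs = [] \/ Fs <> []) by (destruct Fs; [left; auto|right; congruence]).
    destruct HMd as [HMd|HMd]; [|left; right; auto]. destruct HFd; [left; left; auto|right; auto]. }
  destruct Hcase as [HA|[HFs [v HM]]].
  -
    assert (HCt2 : cterm (plug_frames Fs M) k (lets' L CM)).
    { apply (F1 _ _ _ _ HL); auto.
      - intros HFs. destruct HA as [HA|HA]; [contradiction|auto].
      - intros p Hp Hc. apply (HLnames p Hp). apply InMM. auto. }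
    assert (HI2 : cdcl D2' k (lets' (LD1' ++ Dl') (lets' L CM))).
    { apply cdcl_lets'.
      - apply Forall2_app; auto. apply (lrel_mono kn); auto.
      - constructor. auto. }
    apply t_step. apply (red_ak_intro _ _ (lets' LD1' (lets' L Cr)) Aft); auto.
    rewrite EAft. eapply cd_trans; [apply lets'_cong; exact Hsw|]. rewrite <- lets'_app. eapply cdcl_unique; eauto.
  -
    destruct (fstack_snoc _ _ _ _ HL HFs) as (Fs0 & f & L0 & k0' & yl & Bl & EFs & EL & HL0 & Hfi & Hyl & Hknk).
    rewrite HM in HCMt. inversion HCMt; subst CM.
    assert (HinL : In (kn, Lam yl [] Bl) L) by (rewrite EL; apply in_or_app; simpl; auto).
    assert (HknS : ~ In kn Sv) by (apply (HLnames _ HinL)).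
    assert (HblS : forall b, In b (bv_decl Bl) -> ~ In b Sv).
    { intros b Hb. apply (proj2 (HLs _ HinL)). simpl. auto. }
    assert (HvS : In v Sv) by (apply InMM; rewrite HM; rewrite tvars_Var; simpl; auto).
    assert (HfS : forall w, In w (fv_frame f) -> In w Sv).
    { intros w Hw. apply InFr. rewrite EFs. rewrite flat_map_app. apply in_or_app. right. simpl. rewrite app_nil_r. auto. }
    set (Mid := lets' (LD1' ++ Dl' ++ L0) (Let kn (Lam yl [] Bl) (Ret (App (Var kn) (Var v) [])))).
    assert (EMid : lets' LD1' (lets' Dl' (lets' L (Ret (App (Var kn) (Var v) [])))) = Mid).
    { unfold Mid. rewrite EL. rewrite !lets'_app. reflexivity. }
    assert (HakMid : ak_decl Mid).
    { rewrite <- EMid. apply ak_lets'; auto. apply ak_lets'; auto. apply ak_lets'; auto; simpl; eauto. }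
    apply t_trans with Mid.
    + apply t_step. apply (red_ak_intro _ _ (lets' LD1' (lets' L Cr)) Aft); auto.
      rewrite EAft, <- EMid. apply lets'_cong. exact Hsw.
    + set (E3 := {| ec_lets := LD1' ++ Dl' ++ L0; ec_frames := [] |}).
      set (E4 := {| ec_lets := []; ec_frames := [] |}).
      assert (Bef2 : plugD E3 (Let kn (Lam yl [] Bl) (plugD E4 (Ret (App (Var kn) (Var v) (map Var []))))) = Mid).
      { rewrite !plugD_nof by reflexivity. reflexivity. }
      set (Aft2 := plugD E3 (Let kn (Lam yl [] Bl) (plugD E4 (subst_decl (subst_of [yl] [v]) Bl)))).
      assert (EAft2 : Aft2 = lets' (LD1' ++ Dl') (lets' L0 (Let kn (Lam yl [] Bl) (subst_decl [(yl, v)] Bl)))).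
      { unfold Aft2. rewrite !plugD_nof by reflexivity. simpl. rewrite <- lets'_app, <- app_assoc. reflexivity. }
      assert (Hbase2 : base (fun E => ec_frames E = []) Mid Aft2).
      { rewrite <- Bef2. unfold Aft2. apply base_beta; auto.
        all: try (apply plug_ok_nof; reflexivity).
        all: try (intros w [Hw|[]] Hc; subst w; apply (HblS v Hc); auto).
        all: try (simpl; intros w []). }
      assert (Hv' : ~ In v (bv_decl Bl)) by (intro Hc; apply (HblS v Hc); auto).
      assert (HCf : cterm (plug_frame f (Var v)) k0' (subst_decl [(yl, v)] Bl)) by (apply frame_var; auto).
      assert (HCt3 : cterm (plug_frames Fs M) k (lets' L0 (subst_decl [(yl, v)] Bl))).
      { rewrite HM, EFs, PF_app. simpl. apply (F1 _ _ _ _ HL0); auto.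
        - intros _. apply plug_frame_App.
        - intros p Hp Hc. apply tv_pf in Hc. apply (HLnames p); [rewrite EL; apply in_or_app; auto|].
          destruct Hc as [Hc|Hc]; [rewrite tvars_Var in Hc; destruct Hc as [Hc|[]]; rewrite <- Hc; auto| auto]. }
      assert (HI3 : cdcl D2' k (lets' (LD1' ++ Dl') (lets' L0 (subst_decl [(yl, v)] Bl)))).
      { apply cdcl_lets'.
        - apply Forall2_app; auto. apply (lrel_mono kn); auto.
        - constructor. auto. }
      assert (HakAft2 : ak_decl Aft2).
      { rewrite EAft2. apply ak_lets'.
        - intros p Hp. apply in_app_or in Hp. destruct Hp; auto.
        - apply ak_lets'; [intros; apply HakL; rewrite EL; apply in_or_app; auto|].
          simpl. split; [apply (HakL _ HinL)|]. apply ak_subst. apply (HakL _ HinL). }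
      apply t_step. apply (red_ak_intro _ _ Mid Aft2); auto; [apply cd_refl|].
      rewrite EAft2. eapply cd_trans; [|eapply cdcl_unique; eauto].
      apply lets'_cong. apply lets'_cong. apply cd_gc.
      intro Hc. apply fv_subst in Hc. destruct Hc as [u [Hu Eu]].
      rewrite assoc1 in Eu. destruct (finst_fv _ _ _ _ Hfi u Hu) as [Eu'|[Eu'|Eu']].
      * subst u. destruct (Nat.eqb yl k0') eqn:Ey.
        -- subst. auto.
        -- auto.
      * subst u. rewrite Nat.eqb_refl in Eu. subst. auto.
      * destruct (Nat.eqb yl u) eqn:Ey; subst; auto.
Qed.

Lemma red_ak_cong_l X Y X' : red_ak X Y -> ak_decl X' -> cong_decl X' X -> red_ak X' Y.
Proof.
  intros [H1 [H2 [B [A' [H3 [H4 [H5 [H6 H7]]]]]]]] Ha Hc.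
  split; auto. split; auto. exists B, A'. repeat split; auto. eapply cd_trans; eauto.
Qed.

Lemma red_ak_cong_r X Y Y' : red_ak X Y -> ak_decl Y' -> cong_decl Y Y' -> red_ak X Y'.
Proof.
  intros [H1 [H2 [B [A' [H3 [H4 [H5 [H6 H7]]]]]]]] Ha Hc.
  split; auto. split; auto. exists B, A'. repeat split; auto. eapply cd_trans; eauto.
Qed.

Lemma ct_cong_l X Y : clos_trans decl red_ak X Y -> forall X', ak_decl X' -> cong_decl X' X -> clos_trans decl red_ak X' Y.
Proof.
  induction 1; intros X' Ha Hc.
  - apply t_step. eapply red_ak_cong_l; eauto.
  - eapply t_trans; [apply IHclos_trans1; eauto|]. auto.
Qed.

Lemma ct_cong_r X Y : clos_trans decl red_ak X Y -> forall Y', ak_decl Y' -> cong_decl Y Y' -> clos_trans decl red_ak X Y'.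
Proof.
  induction 1; intros Y' Ha Hc.
  - apply t_step. eapply red_ak_cong_r; eauto.
  - eapply t_trans; [eauto|]. apply IHclos_trans2; auto.
Qed.

Lemma part2 (D D' : decl) (k : var) :
  ~ In k (allvars_decl D) -> ~ In k (allvars_decl D') -> red_a D D' ->
  clos_trans decl red_ak (cps_decl D k) (cps_decl D' k).
Proof.
  intros HkD HkD' [D1 [D2 [Hc1 [Hb Hc2]]]].
  set (ks := fresh (k :: allvars_decl D ++ allvars_decl D1 ++ allvars_decl D2 ++ allvars_decl D')).
  assert (Hks : forall z, In z (k :: allvars_decl D ++ allvars_decl D1 ++ allvars_decl D2 ++ allvars_decl D') -> z <> ks)
    by (intros z Hz E; subst; apply fresh_notin in Hz; auto).
  assert (K0 : k <> ks) by (apply Hks; simpl; auto).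
  assert (K1 : ~ In ks (allvars_decl D)) by (intro; apply (Hks ks); auto; right; apply in_or_app; auto).
  assert (K2 : ~ In ks (allvars_decl D1)) by (intro; apply (Hks ks); auto; right; apply in_or_app; right; apply in_or_app; auto).
  assert (K3 : ~ In ks (allvars_decl D2)) by (intro; apply (Hks ks); auto; right; apply in_or_app; right; apply in_or_app; right; apply in_or_app; auto).
  assert (K4 : ~ In ks (allvars_decl D')) by (intro; apply (Hks ks); auto; right; apply in_or_app; right; apply in_or_app; right; apply in_or_app; auto).
  destruct (cdcl_exists [] D ks K1) as [CD [HCD _]].
  destruct (cdcl_exists [] D1 ks K2) as [CD1 [HCD1 _]].
  destruct (cdcl_exists [] D2 ks K3) as [CD2 [HCD2 _]].
  destruct (cdcl_exists [] D' ks K4) as [CD' [HCD' _]].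
  assert (Hmid : clos_trans decl red_ak CD CD').
  { apply ct_cong_l with CD1; [| apply (proj2 cvd_ak _ _ _ HCD) | exact ((proj2 cong_cps) D D1 Hc1 ks K1 K2 CD CD1 HCD HCD1)].
    apply ct_cong_r with CD2; [| apply (proj2 cvd_ak _ _ _ HCD') | exact ((proj2 cong_cps) D2 D' Hc2 ks K3 K4 CD2 CD' HCD2 HCD')].
    exact (step_sim D1 D2 ks Hb K2 K3 CD1 CD2 HCD1 HCD2). }
  pose proof (swap_inj ks k) as Hinj.
  assert (Hid : forall d, ~ In k (allvars_decl d) -> ~ In ks (allvars_decl d) -> ren_decl (swap ks k) d = d).
  { intros d H1 H2. apply (proj2 (ren_id (swap ks k))). intros x Hx. apply swap_id; intro; subst; auto. }
  pose proof (ct_red_ak_ren _ Hinj _ _ Hmid) as Hr.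
  pose proof (proj2 (cvd_ren _ Hinj) _ _ _ HCD) as R1.
  pose proof (proj2 (cvd_ren _ Hinj) _ _ _ HCD') as R2.
  rewrite swap_l, Hid in R1 by auto. rewrite swap_l, Hid in R2 by auto.
  pose proof (cps_decl_inst D k HkD) as I1. pose proof (cps_decl_inst D' k HkD') as I2.
  apply ct_cong_l with (ren_decl (swap ks k) CD); [| apply (proj2 cvd_ak _ _ _ I1) | eapply cdcl_unique; eauto].
  apply ct_cong_r with (ren_decl (swap ks k) CD'); [auto | apply (proj2 cvd_ak _ _ _ I2) | eapply cdcl_unique; eauto].
Qed.

Lemma psi_arr A1 As B : psi (TArr A1 As B) = TArr (psi A1) (map psi As ++ [Kty B]) TR.
Proof. reflexivity. Qed.

Definition psiP (p : var * ty) := (fst p, psi (snd p)).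

Lemma lookup_app l G v : lookup (l ++ G) v = match lookup l v with Some t => Some t | None => lookup G v end.
Proof. induction l as [|[a t] l IH]; simpl; auto. destruct (Nat.eqb a v); auto. Qed.

Lemma lookup_map l v : lookup (map psiP l) v = option_map psi (lookup l v).
Proof. induction l as [|[a t] l IH]; simpl; auto. destruct (Nat.eqb a v); auto. Qed.

Lemma lookup_None l v : lookup l v = None -> ~ In v (map fst l).
Proof.
  induction l as [|[a t] l IH]; simpl; auto. destruct (Nat.eqb a v) eqn:E; [discriminate|].
  intros H [H'|H']; [subst; rewrite Nat.eqb_refl in E; discriminate| apply IH; auto].
Qed.

Lemma map_fst_combine {A B} (ys : list A) (As : list B) : length ys = length As -> map fst (combine ys As) = ys.
Proof. revert As. induction ys; destruct As; simpl; intros; try discriminate; auto. f_equal. auto. Qed.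

Lemma rev_combine_map ys As : rev (combine ys (map psi As)) = map psiP (rev (combine ys As)).
Proof.
  rewrite map_rev. f_equal. revert As. induction ys; destruct As; simpl; auto. f_equal. auto.
Qed.

Definition agree (Dl : tctx) (G : tctx) (V : list var) := forall v, In v V -> lookup Dl v = option_map psi (lookup G v).

Lemma lookup_extend Dl G ys As v : length ys = length As ->
  (lookup Dl v = option_map psi (lookup G v) \/ In v ys) ->
  lookup (extend Dl ys (map psi As)) v = option_map psi (lookup (extend G ys As) v).
Proof.
  intros Hl H. unfold extend. rewrite rev_combine_map, !lookup_app, lookup_map.
  destruct (lookup (rev (combine ys As)) v) eqn:E; simpl; auto.
  destruct H as [H|H]; auto. exfalso. apply lookup_None in E. apply E.
  rewrite map_rev, <- in_rev, map_fst_combine; auto.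
Qed.

Lemma extend_snoc Dl ys As y A : length ys = length As ->
  extend Dl (ys ++ [y]) (As ++ [A]) = (y, A) :: extend Dl ys As.
Proof. intros H. unfold extend. rewrite combine_app' by auto. simpl. rewrite rev_app_distr. reflexivity. Qed.

Lemma F2_shift Dl y A acc ts : Forall2 (fun v T => lookup Dl v = Some (psi T)) acc ts -> ~ In y acc ->
  Forall2 (fun v T => lookup ((y, A) :: Dl) v = Some (psi T)) acc ts.
Proof.
  induction 1; intros Hy; constructor.
  - simpl. destruct (Nat.eqb y x) eqn:E; auto. apply Nat.eqb_eq in E. subst. exfalso. apply Hy. simpl. auto.
  - apply IHForall2. intro; apply Hy; simpl; auto.
Qed.

Lemma lookup_cons_neq y A Dl v : y <> v -> lookup ((y, A) :: Dl) v = lookup Dl v.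
Proof. intros H. simpl. rewrite <- Nat.eqb_neq in H. rewrite H. auto. Qed.

Lemma capp_typed acc rest k C : capp acc rest k C -> forall Dl G ts1 ts2 A1 As B,
  Forall2 (fun v T => lookup Dl v = Some (psi T)) acc ts1 -> Forall2 (has_type_t G) rest ts2 ->
  ts1 ++ ts2 = TArr A1 As B :: A1 :: As -> lookup Dl k = Some (Kty B) ->
  agree Dl G (tvars_list rest) -> has_type_d Dl C TR.
Proof.
  induction 1; intros Dl G ts1 ts2 A1 As B HF1 HF2 Ets Hk Hag.
  - inversion HF2; subst. rewrite app_nil_r in Ets. subst ts1.
    inversion HF1 as [|? ? ? ? Hx Hxs]; subst. inversion Hxs as [|x1 T1 xs' ts' Hx1 Hxs']; subst.
    simpl. constructor. apply T_app with (A1 := psi A1) (As := map psi As ++ [Kty B]).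
    + constructor. rewrite psi_arr in Hx. auto.
    + constructor. auto.
    + rewrite map_app. apply Forall2_app.
      * clear -Hxs'. induction Hxs'; constructor; auto. constructor. auto.
      * constructor; [constructor; auto|constructor].
  - inversion HF2 as [|? T ? ts2' HT Hrest]; subst. inversion HT as [? ? ? HG|]; subst.
    apply (IHcapp Dl G (ts1 ++ [T]) ts2' A1 As B); auto.
    + apply Forall2_app; auto. constructor; [|constructor].
      rewrite Hag; [rewrite HG; auto|]. autorewrite with tv. simpl. auto.
    + rewrite <- app_assoc. auto.
    + intros w Hw. apply Hag. autorewrite with tv. simpl. auto.
  - inversion HF2 as [|? T ? ts2' HT Hrest]; subst.
    inversion HT as [|? ? ? ? A1' As' ? Hm Hm1 Hms]; subst.
    apply T_let_lam with (A1 := psi T) (As := []) (C := TR); auto.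
    + change (extend Dl [y] [psi T]) with ((y, psi T) :: Dl).
      apply (IHcapp1 _ G (ts1 ++ [T]) ts2' A1 As B); auto.
      * apply Forall2_app; [apply F2_shift; auto; intro; apply H; simpl; right; apply in_or_app; auto|].
        constructor; [|constructor]. simpl. rewrite Nat.eqb_refl. auto.
      * rewrite <- app_assoc. auto.
      * rewrite lookup_cons_neq; auto. intro; subst; apply H; simpl; auto.
      * intros w Hw. rewrite lookup_cons_neq; [|intro; subst; apply H; simpl; right; apply in_or_app; auto].
        apply Hag. rewrite tvars_list_cons. apply in_or_app. auto.
    + apply (IHcapp2 _ G [] (TArr A1' As' T :: A1' :: As') A1' As' T); auto.
      * simpl. rewrite Nat.eqb_refl. auto.
      * intros w Hw. rewrite lookup_cons_neq; [|intro; subst; auto].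
        apply Hag. rewrite tvars_list_cons, tvars_App. apply in_or_app. left.
        rewrite !tvars_list_cons in Hw. auto.
Qed.

Lemma cterm_typed G m A k C Dl : has_type_t G m A -> cterm m k C -> lookup Dl k = Some (Kty A) ->
  agree Dl G (tvars m) -> has_type_d Dl C TR.
Proof.
  intros HT HC Hk Hag. destruct HC as [x k|m m1 ms k C HC].
  - inversion HT as [? ? ? HG|]; subst. constructor. apply T_app with (A1 := psi A) (As := []).
    + constructor. auto.
    + constructor. rewrite Hag; [rewrite HG; auto|]. rewrite tvars_Var. simpl. auto.
    + constructor.
  - inversion HT as [|? ? ? ? A1 As ? Hm Hm1 Hms]; subst.
    apply (capp_typed _ _ _ _ HC Dl G [] (TArr A1 As A :: A1 :: As) A1 As A); auto.
    all: intros w Hw; apply Hag; rewrite tvars_App; rewrite !tvars_list_cons in Hw; auto.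
Qed.

Lemma cdcl_typed G d A : has_type_d G d A -> forall kk CC Dl, cdcl d kk CC -> lookup Dl kk = Some (Kty A) ->
  agree Dl G (fv_decl d) -> has_type_d Dl CC TR.
Proof.
  induction 1; intros kk CC Dl HC Hk Hag.
  - inversion HC; subst. eapply cterm_typed; eauto.
  - inversion HC as [|? ? ? ? V C' Hxk HV HC']; subst. inversion HV; subst.
    constructor. apply (IHhas_type_d kk C' ((x, TUnit) :: Dl)); auto.
    + rewrite lookup_cons_neq; auto.
    + intros v Hv. simpl. destruct (Nat.eqb x v) eqn:E; auto.
      apply Hag. simpl. apply In_remove_all. split; auto. simpl. intros [E'|[]]. subst. rewrite Nat.eqb_refl in E. discriminate.
  - inversion HC as [|? ? ? ? V C' Hxk HV HC']; subst.
    inversion HV as [|? ? ? k0 C0 Hk0 Hk0' HC0]; subst.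
    apply T_let_lam with (A1 := psi A1) (As := map psi As ++ [Kty C]) (C := TR).
    + rewrite !length_app, length_map. simpl. lia.
    + apply (IHhas_type_d1 k0 C0).
      * auto.
      * change (y :: ys ++ [k0]) with ((y :: ys) ++ [k0]). change (psi A1 :: map psi As ++ [Kty C]) with ((psi A1 :: map psi As) ++ [Kty C]).
        rewrite extend_snoc by (simpl; rewrite length_map; auto). simpl. rewrite Nat.eqb_refl. auto.
      * intros v Hv. change (y :: ys ++ [k0]) with ((y :: ys) ++ [k0]). change (psi A1 :: map psi As ++ [Kty C]) with ((psi A1 :: map psi As) ++ [Kty C]).
        rewrite extend_snoc by (simpl; rewrite length_map; auto).
        rewrite lookup_cons_neq by (intro; subst; auto).
        change (psi A1 :: map psi As) with (map psi (A1 :: As)). apply lookup_extend; [simpl; auto|].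
        destruct (in_dec Nat.eq_dec v (y :: ys)); auto. left. apply Hag. simpl. apply in_or_app. left.
        apply In_remove_all. auto.
    + rewrite <- psi_arr. apply (IHhas_type_d2 kk C').
      * auto.
      * rewrite lookup_cons_neq; auto.
      * intros v Hv. simpl. destruct (Nat.eqb x v) eqn:E; auto.
        apply Hag. simpl. apply in_or_app. right. apply In_remove_all. split; auto. simpl. intros [E'|[]]. subst. rewrite Nat.eqb_refl in E. discriminate.
Qed.

Lemma part1 G D A k : ~ In k (allvars_decl D) -> has_type_d G D A ->
  has_type_d ((k, Kty A) :: psi_ctx G) (cps_decl D k) TR.
Proof.
  intros Hk HT. apply (cdcl_typed _ _ _ HT k). 
  - apply cps_decl_inst. auto.
  - simpl. rewrite Nat.eqb_refl. auto.
  - intros v Hv. rewrite lookup_cons_neq by (intro; subst; apply Hk; apply fv_in_av; auto).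
    unfold psi_ctx. change (fun p : var * ty => (fst p, psi (snd p))) with psiP. apply lookup_map.
Qed.

Theorem theorem2 :
  (forall (G : tctx) (D : decl) (A : ty) (k : var),
      ~ In k (allvars_decl D) ->
      has_type_d G D A ->
      has_type_d ((k, Kty A) :: psi_ctx G) (cps_decl D k) TR)
  /\
  (forall (G : tctx) (D D' : decl) (A : ty) (k : var),
      ~ In k (allvars_decl D) -> ~ In k (allvars_decl D') ->
      has_type_d G D A ->
      red_a D D' ->
      clos_trans decl red_ak (cps_decl D k) (cps_decl D' k)).
Proof.
  split.
  - intros G D A k Hk HT. apply part1; auto.
  - intros G D D' A k Hk Hk' HT Hred. apply part2; auto.
Qed.
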